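(* Let $r\ge1$, $\mu\in\mathcal P_r$, $n\in\mathbb N$ and $\mathbf p\in\Pi_n$, with $P_i=\sum_{j=1}^ip_j$ ($P_0=0$). Then there exists $\mathbf x\in\Xi_n$ minimizing $\mathbf y\mapsto d_r(\delta^{\mathbf p}_{\mathbf y},\mu)$ over $\Xi_n$. Moreover: (a) For $r=1$: $\mathbf x\in\Xi_n$ is such a minimizer if and only if, for every $i=1,\dots,n$, $P_{i-1}<P_i$ implies $x_i\in Q^{F_\mu}_{(P_{i-1}+P_i)/2}$. (b) For $r>1$: $\mathbf x\in\Xi_n$ is such a minimizer if and only if, for every $i=1,\dots,n$, $P_{i-1}<P_i$ implies $x_i=\tau_r^{f_i}$, where $f_i$ is the restriction of $F_\mu^{-1}$ to $[P_{i-1},P_i]$.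
   Context: $\mathcal P$ denotes the set of Borel probability measures on $\mathbb R$; $\mathcal P_r=\{\mu\in\mathcal P:\int|x|^r{\rm d}\mu(x)<\infty\}$. For $\mu\in\mathcal P$, $F_\mu(x)=\mu(]-\infty,x])$ and $F_\mu^{-1}(t)=\sup\{x: F_\mu(x)\le t\}$, $t\in]0,1[$. $d_r(\mu,\nu)=\big(\int_0^1|F_\mu^{-1}(t)-F_\nu^{-1}(t)|^r{\rm d}t\big)^{1/r}$. $\Xi_n=\{\mathbf x\in\mathbb R^n:x_1\le\dots\le x_n\}$, $\Pi_n=\{\mathbf p\in\mathbb R^n:p_i\ge0,\sum_ip_i=1\}$, $\delta^{\mathbf p}_{\mathbf x}=\sum_ip_i\delta_{x_i}$. For $s\in]0,1[$, $Q^{F_\mu}_s=[\inf\{x\in\mathbb R:F_\mu(x)\ge s\},\ \sup\{x\in\mathbb R:F_\mu(x)\le s\}]$ (the set of $s$-quantiles of $\mu$). For a bounded non-degenerate interval $J$ and $f\in L^r(J)$ with $r>1$, $\tau_r^f$ denotes the unique real number minimizing $t\mapsto\|f-t\|_{L^r(J)}$. *)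

(* Defs.v *)
From Stdlib Require Import Reals Lra Lia Classical ClassicalEpsilon.
Open Scope R_scope.

(** Classical supremum / infimum of a set of reals (junk value 0 if no lub). *)
Definition Rsup (S : R -> Prop) : R := epsilon (inhabits 0) (fun L => is_lub S L).
Definition Rinf (S : R -> Prop) : R := - Rsup (fun x => S (- x)).

Definition rpow (x y : R) : R := if Rle_dec x 0 then 0 else Rpower x y.

(** A Borel probability measure on R, represented by its distribution function
    F(x) = mu(]-oo,x]): nondecreasing, right-continuous, F(-oo)=0, F(+oo)=1. *)
Definition is_cdf (F : R -> R) : Prop :=
  (forall x y, x <= y -> F x <= F y) /\
  (forall x eps, 0 < eps -> exists delta, 0 < delta /\
       forall y, x <= y < x + delta -> Rabs (F y - F x) < eps) /\
  (forall eps, 0 < eps -> exists M, forall x, x <= - M -> Rabs (F x) < eps) /\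
  (forall eps, 0 < eps -> exists M, forall x, M <= x -> Rabs (F x - 1) < eps).

Definition Finv (F : R -> R) (t : R) : R := Rsup (fun x => F x <= t).

Definition in_Q (F : R -> R) (s x : R) : Prop :=
  Rinf (fun y => s <= F y) <= x /\ x <= Rsup (fun y => F y <= s).

Definition RInt_is (g : R -> R) (c d v : R) : Prop :=
  exists pr : Riemann_integrable g c d, RiemannInt pr = v.
Definition compact_ints (g : R -> R) (a b : R) : R -> Prop :=
  fun v => exists c d, a < c /\ c <= d /\ d < b /\ RInt_is g c d v.

(** (Improper) integral over ]a,b[ of a nonnegative, locally Riemann
    integrable function: supremum of its integrals over compact subintervals
    (equals the Lebesgue integral by monotone convergence). *)
Definition impInt (g : R -> R) (a b : R) : R := Rsup (compact_ints g a b).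

(** mu in P_r : int |x|^r dmu = int_0^1 |F^{-1}(t)|^r dt < oo. *)
Definition finite_moment (r : R) (F : R -> R) : Prop :=
  exists B, is_upper_bound (compact_ints (fun t => rpow (Rabs (Finv F t)) r) 0 1) B.

(** Wasserstein-type distance d_r via quantile functions. *)
Definition d_r (r : R) (F G : R -> R) : R :=
  rpow (impInt (fun t => rpow (Rabs (Finv F t - Finv G t)) r) 0 1) (1 / r).

(** Vectors are indexed 1..n (functions nat -> R). *)
Fixpoint Psum (p : nat -> R) (i : nat) : R :=
  match i with O => 0 | S k => Psum p k + p (S k) end.

Definition in_Xi (n : nat) (x : nat -> R) : Prop :=
  forall i, (1 <= i)%nat -> (i < n)%nat -> x i <= x (S i).

Definition in_Pi (n : nat) (p : nat -> R) : Prop :=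
  (forall i, (1 <= i <= n)%nat -> 0 <= p i) /\ Psum p n = 1.

(** Distribution function of delta^p_x = sum_i p_i delta_{x_i}. *)
Fixpoint disc_cdf (n : nat) (p x : nat -> R) (z : R) : R :=
  match n with
  | O => 0
  | S k => disc_cdf k p x z + (if Rle_dec (x (S k)) z then p (S k) else 0)
  end.

Definition is_minimizer (r : R) (F : R -> R) (n : nat) (p x : nat -> R) : Prop :=
  forall y, in_Xi n y -> d_r r (disc_cdf n p x) F <= d_r r (disc_cdf n p y) F.

Definition Lr_dist (r a b : R) (f : R -> R) (t : R) : R :=
  rpow (impInt (fun u => rpow (Rabs (f u - t)) r) a b) (1 / r).

Definition is_unique_min (r a b : R) (f : R -> R) (t : R) : Prop :=
  (forall s, Lr_dist r a b f t <= Lr_dist r a b f s) /\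
  (forall s, (forall s', Lr_dist r a b f s <= Lr_dist r a b f s') -> s = t).

Definition tau (r a b : R) (f : R -> R) : R :=
  epsilon (inhabits 0) (fun t => is_unique_min r a b f t).

(* Main.v *)
Require Import Defs.
From Stdlib Require Import Reals Lra Lia Classical ClassicalEpsilon FunctionalExtensionality PropExtensionality.
From Coquelicot Require Import Coquelicot.
From Stdlib Require Import RList.
Open Scope R_scope.
Implicit Types g h : R -> R.

Lemma IsStepFun_ext_open (f g : R -> R) a b :
  a <= b -> IsStepFun f a b -> (forall x, a < x < b -> f x = g x) -> IsStepFun g a b.
Proof.
  intros Hab [l [lf H3]] Heq. split with l; split with lf.
  destruct H3 as [H [H1 [H0 [H2 H4]]]].
  unfold adapted_couple; repeat split; try assumption.
  intros i Hi; assert (H9 := H4 i Hi); unfold constant_D_eq, open_interval in *.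
  intros x Hx. rewrite <- (H9 x Hx). symmetry; apply Heq.
  assert (Hl : forall j, (j < length l)%nat -> a <= pos_Rl l j <= b).
  { intros j Hj. split.
    - replace a with (Rmin a b) by (unfold Rmin; destruct (Rle_dec a b); lra).
      rewrite <- H1. elim (RList_P6 l); intros Hp _. apply Hp; auto; lia.
    - replace b with (Rmax a b) by (unfold Rmax; destruct (Rle_dec a b); lra).
      rewrite <- H0. elim (RList_P6 l); intros Hp _. apply Hp; auto; lia. }
  assert (A1 := Hl i ltac:(lia)). assert (A2 := Hl (S i) ltac:(lia)). lra.
Qed.

Definition Approx (h : R -> R) a b e := exists (phi psi : StepFun a b),
  (forall t, a <= t <= b -> Rabs (h t - phi t) <= psi t) /\ RiemannInt_SF psi <= e.

Lemma Approx_le h a b e e' : Approx h a b e -> e <= e' -> Approx h a b e'.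
Proof. intros [phi [psi [H1 H2]]] He. exists phi, psi. split; auto; lra. Qed.

Lemma Approx_single h a b : a <= b ->
  (forall s t, a <= s -> s <= t -> t <= b -> h s <= h t) ->
  Approx h a b ((b - a) * (h b - h a)).
Proof.
  intros Hab Hm.
  exists (mkStepFun (StepFun_P4 a b (h a))), (mkStepFun (StepFun_P4 a b (h b - h a))).
  split.
  - intros t Ht; simpl; unfold fct_cte.
    assert (h a <= h t) by (apply Hm; lra). assert (h t <= h b) by (apply Hm; lra).
    rewrite Rabs_right; lra.
  - rewrite StepFun_P18. lra.
Qed.

Lemma Approx_glue h a b c e1 e2 : a <= b -> b <= c ->
  Approx h a b e1 -> Approx h b c e2 -> Approx h a c (e1 + e2).
Proof.
  intros Hab Hbc [phi1 [psi1 [H1 H1']]] [phi2 [psi2 [H2 H2']]].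
  set (phi3 := fun x => if Rle_dec x b then phi1 x else phi2 x).
  set (psi3 := fun x => if Rle_dec x b then psi1 x else psi2 x).
  assert (Pab : IsStepFun phi3 a b).
  { apply IsStepFun_ext_open with phi1; [lra| apply (pre phi1)|].
    intros x Hx; unfold phi3; destruct (Rle_dec x b); [reflexivity|lra]. }
  assert (Pbc : IsStepFun phi3 b c).
  { apply IsStepFun_ext_open with phi2; [lra| apply (pre phi2)|].
    intros x Hx; unfold phi3; destruct (Rle_dec x b); [lra|reflexivity]. }
  assert (Qab : IsStepFun psi3 a b).
  { apply IsStepFun_ext_open with psi1; [lra| apply (pre psi1)|].
    intros x Hx; unfold psi3; destruct (Rle_dec x b); [reflexivity|lra]. }
  assert (Qbc : IsStepFun psi3 b c).
  { apply IsStepFun_ext_open with psi2; [lra| apply (pre psi2)|].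
    intros x Hx; unfold psi3; destruct (Rle_dec x b); [lra|reflexivity]. }
  pose proof (StepFun_P46 Pab Pbc) as Pac.
  pose proof (StepFun_P46 Qab Qbc) as Qac.
  exists (mkStepFun Pac), (mkStepFun Qac). split.
  - intros t Ht; simpl; unfold phi3, psi3; destruct (Rle_dec t b).
    + apply H1; lra.
    + apply H2; lra.
  - rewrite <- (StepFun_P43 Qab Qbc Qac).
    assert (E1 : RiemannInt_SF (mkStepFun Qab) = RiemannInt_SF psi1).
    { apply Rle_antisym; apply StepFun_P37; auto; simpl; intros x Hx;
      unfold psi3; destruct (Rle_dec x b); lra. }
    assert (E2 : RiemannInt_SF (mkStepFun Qbc) = RiemannInt_SF psi2).
    { apply Rle_antisym; apply StepFun_P37; auto; simpl; intros x Hx;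
      unfold psi3; destruct (Rle_dec x b); lra. }
    rewrite E1, E2; lra.
Qed.

Lemma Approx_N h a del : 0 <= del -> forall N : nat,
  (forall s t, a <= s -> s <= t -> t <= a + INR N * del -> h s <= h t) ->
  Approx h a (a + INR N * del) (del * (h (a + INR N * del) - h a)).
Proof.
  intros Hd N; induction N as [|N IH]; intros Hm.
  - change (INR 0) with 0 in *. replace (a + 0 * del) with a in * by ring. eapply Approx_le. apply Approx_single; [lra|]. intros; apply Hm; lra. right; ring.
  - rewrite S_INR in *.
    assert (HN : 0 <= INR N) by apply pos_INR.
    replace (del * (h (a + (INR N + 1) * del) - h a)) with
      (del * (h (a + INR N * del) - h a) + ((a + (INR N + 1) * del) - (a + INR N * del)) *
        (h (a + (INR N + 1) * del) - h (a + INR N * del))) by ring.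
    apply Approx_glue with (a + INR N * del); try nra.
    + apply IH. intros; apply Hm; nra.
    + apply Approx_single; [nra|]. intros; apply Hm; nra.
Qed.

Lemma mono_Riemann h a b : a <= b ->
  (forall s t, a <= s -> s <= t -> t <= b -> h s <= h t) -> Riemann_integrable h a b.
Proof.
  intros Hab Hm eps.
  assert (Hex : Approx h a b (eps / 2)).
  { assert (0 < eps) by apply cond_pos.
    assert (0 <= h b - h a) by (assert (h a <= h b) by (apply Hm; lra); lra).
    destruct (INR_archimed (eps/2) ((b - a) * (h b - h a)) ltac:(lra)) as [N Hup].
    destruct N as [|N'].
    - change (INR 0) with 0 in Hup. nra.
    - set (N := S N') in *.
      assert (HN0 : 0 < INR N) by (unfold N; apply lt_0_INR; lia).
      set (del := (b - a) / INR N).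
      assert (Hb : a + INR N * del = b) by (unfold del; field; lra).
      pose proof (Approx_N h a del ltac:(unfold del; apply Rmult_le_pos; [lra| left; apply Rinv_0_lt_compat; lra]) N) as HA.
      rewrite Hb in HA. eapply Approx_le. apply HA. intros; apply Hm; lra.
      unfold del. unfold Rdiv.
      apply Rmult_le_reg_l with (INR N); auto.
      replace (INR N * ((b - a) * / INR N * (h b - h a))) with ((b - a) * (h b - h a)) by (field; lra).
      lra. }
  apply constructive_indefinite_description in Hex. destruct Hex as [phi Hphi].
  apply constructive_indefinite_description in Hphi. destruct Hphi as [psi [H1 H2]].
  exists phi, psi. split.
  - intros t; rewrite Rmin_left, Rmax_right by lra. apply H1.
  - assert (0 <= RiemannInt_SF psi).
    { replace 0 with (RiemannInt_SF (mkStepFun (StepFun_P4 a b 0)))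
        by (rewrite StepFun_P18; ring).
      apply StepFun_P37; auto. intros x Hx; simpl; unfold fct_cte.
      eapply Rle_trans; [apply Rabs_pos| apply H1; lra]. }
    assert (0 < eps) by apply cond_pos.
    rewrite Rabs_right; lra.
Qed.

Lemma mono_ex_RInt h a b : a <= b ->
  (forall s t, a <= s -> s <= t -> t <= b -> h s <= h t) -> ex_RInt h a b.
Proof. intros; apply ex_RInt_Reals_1; apply mono_Riemann; auto. Qed.

Lemma antimono_ex_RInt h a b : a <= b ->
  (forall s t, a <= s -> s <= t -> t <= b -> h t <= h s) -> ex_RInt h a b.
Proof.
  intros Hab Hm.
  assert (E : ex_RInt (fun t => - h t) a b).
  { apply mono_ex_RInt; auto. intros s t H1 H2 H3; specialize (Hm s t H1 H2 H3); lra. }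
  apply (ex_RInt_opp (V:=R_NormedModule)) in E.
  eapply ex_RInt_ext; [|exact E]. intros x _. simpl. unfold opp; simpl. ring.
Qed.

Lemma Rsup_lub (S : R -> Prop) : (exists x, S x) -> (exists B, is_upper_bound S B) ->
  is_lub S (Rsup S).
Proof.
  intros [x Hx] [B HB].
  destruct (completeness S (ex_intro _ B HB) (ex_intro _ x Hx)) as [m Hm].
  unfold Rsup. apply epsilon_spec. exists m; exact Hm.
Qed.

Section CDF.
Variable F : R -> R.
Hypothesis HF : is_cdf F.

Lemma F_mono : forall x y, x <= y -> F x <= F y.
Proof. destruct HF as [H _]; exact H. Qed.

Lemma F_rc : forall x eps, 0 < eps -> exists delta, 0 < delta /\
       forall y, x <= y < x + delta -> Rabs (F y - F x) < eps.
Proof. destruct HF as [_ [H _]]; exact H. Qed.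

Lemma F_low : forall t, 0 < t -> exists M, forall x, x <= M -> F x < t.
Proof.
  intros t Ht. destruct HF as [_ [_ [H _]]]. destruct (H t Ht) as [M HM].
  exists (- M). intros x Hx. specialize (HM x Hx). apply Rabs_def2 in HM. lra.
Qed.

Lemma F_high : forall t, t < 1 -> exists M, forall x, M <= x -> t < F x.
Proof.
  intros t Ht. destruct HF as [_ [_ [_ H]]]. destruct (H (1 - t) ltac:(lra)) as [M HM].
  exists M. intros x Hx. specialize (HM x Hx). apply Rabs_def2 in HM. lra.
Qed.

Lemma F_ge0 : forall x, 0 <= F x.
Proof.
  intros x. apply Rnot_lt_le; intro Hlt.
  destruct HF as [_ [_ [H _]]]. destruct (H (- F x / 2) ltac:(lra)) as [M HM].
  pose proof (HM (Rmin (- M) x) (Rmin_l _ _)). pose proof (F_mono (Rmin (- M) x) x (Rmin_r _ _)).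
  apply Rabs_def2 in H0. lra.
Qed.

Lemma F_le1 : forall x, F x <= 1.
Proof.
  intros x. apply Rnot_lt_le; intro Hlt.
  destruct HF as [_ [_ [_ H]]]. destruct (H ((F x - 1) / 2) ltac:(lra)) as [M HM].
  pose proof (HM (Rmax M x) (Rmax_l _ _)). pose proof (F_mono x (Rmax M x) (Rmax_r _ _)).
  apply Rabs_def2 in H0. lra.
Qed.

Lemma Finv_lub : forall t, 0 < t < 1 -> is_lub (fun x => F x <= t) (Finv F t).
Proof.
  intros t Ht. unfold Finv. apply Rsup_lub.
  - destruct (F_low t ltac:(lra)) as [M HM]. exists M. left; apply HM; lra.
  - destruct (F_high t ltac:(lra)) as [M HM]. exists M. intros x Hx.
    destruct (Rle_lt_dec x M); auto. specialize (HM x ltac:(lra)). lra.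
Qed.

Lemma Finv_ge_of : forall t y, 0 < t < 1 -> F y <= t -> y <= Finv F t.
Proof. intros t y Ht Hy. apply (Finv_lub t Ht); auto. Qed.

Lemma Finv_le_of : forall t y, 0 < t < 1 -> t < F y -> Finv F t <= y.
Proof.
  intros t y Ht Hy. apply (Finv_lub t Ht). intros z Hz.
  destruct (Rle_lt_dec z y); auto. pose proof (F_mono y z ltac:(lra)). lra.
Qed.

Lemma Finv_mono : forall s t, 0 < s -> s <= t -> t < 1 -> Finv F s <= Finv F t.
Proof.
  intros s t H1 H2 H3. apply (Finv_lub s ltac:(lra)). intros z Hz.
  apply Finv_ge_of; lra.
Qed.

Lemma Finv_gt_of : forall t y, 0 < t < 1 -> F y < t -> y < Finv F t.
Proof.
  intros t y Ht Hy. destruct (F_rc y (t - F y) ltac:(lra)) as [d [Hd Hd']].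
  specialize (Hd' (y + d/2) ltac:(lra)). apply Rabs_def2 in Hd'.
  pose proof (Finv_ge_of t (y + d/2) Ht ltac:(lra)). lra.
Qed.

Lemma in_Q_iff : forall s x, 0 < s < 1 ->
  (in_Q F s x <-> (s <= F x /\ forall w, w < x -> F w <= s)).
Proof.
  intros s x Hs. unfold in_Q, Rinf.
  set (A := fun y => s <= F (- y)).
  assert (HA : is_lub A (Rsup A)).
  { apply Rsup_lub.
    - destruct (F_high s ltac:(lra)) as [M HM]. exists (- M). unfold A.
      rewrite Ropp_involutive. left; apply HM; lra.
    - destruct (F_low s ltac:(lra)) as [M HM]. exists (- M). intros y Hy; unfold A in Hy.
      destruct (Rle_lt_dec y (- M)); auto. specialize (HM (- y) ltac:(lra)). lra. }
  assert (HU : is_lub (fun y => F y <= s) (Rsup (fun y => F y <= s))).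
  { exact (Finv_lub s Hs). }
  split.
  - intros [H1 H2]. split.
    + apply Rnot_lt_le; intro Hlt.
      destruct (F_rc x (s - F x) ltac:(lra)) as [d [Hd Hd']].
      assert (is_upper_bound A (- (x + d))).
      { intros y Hy. unfold A in Hy. apply Rnot_lt_le; intro Hy2.
        destruct (Rle_lt_dec (- y) x).
        - pose proof (F_mono (- y) x r). lra.
        - specialize (Hd' (- y) ltac:(lra)). apply Rabs_def2 in Hd'. lra. }
      destruct HA as [_ HA2]. specialize (HA2 _ H). lra.
    + intros w Hw. apply Rnot_lt_le; intro Hlt.
      assert (is_upper_bound (fun y => F y <= s) w).
      { intros z Hz. apply Rnot_lt_le; intro Hz2. pose proof (F_mono w z ltac:(lra)). lra. }
      destruct HU as [_ HU2]. specialize (HU2 _ H). lra.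
  - intros [H1 H2]. split.
    + destruct HA as [HA1 _]. assert (A (- x)) by (unfold A; rewrite Ropp_involutive; lra).
      specialize (HA1 _ H). lra.
    + destruct HU as [HU1 _]. apply Rnot_lt_le; intro Hlt.
      set (w := (Rsup (fun y => F y <= s) + x) / 2).
      specialize (HU1 w (H2 w ltac:(unfold w; lra))). unfold w in HU1. lra.
Qed.

End CDF.

Lemma rpow_pos_eq x y : 0 < x -> rpow x y = Rpower x y.
Proof. intros H; unfold rpow; destruct (Rle_dec x 0); [lra|auto]. Qed.

Lemma rpow_le0 x y : x <= 0 -> rpow x y = 0.
Proof. intros H; unfold rpow; destruct (Rle_dec x 0); [auto|lra]. Qed.

Lemma Rpower_pos x y : 0 < Rpower x y.
Proof. unfold Rpower; apply exp_pos. Qed.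

Lemma rpow_nonneg x y : 0 <= rpow x y.
Proof. unfold rpow; destruct (Rle_dec x 0); [lra|left; apply Rpower_pos]. Qed.

Lemma rpow_posv x y : 0 < x -> 0 < rpow x y.
Proof. intros; rewrite rpow_pos_eq; auto; apply Rpower_pos. Qed.

Lemma rpow_1 x : 0 <= x -> rpow x 1 = x.
Proof.
  intros H; destruct (Req_dec x 0) as [->|Hn]; [apply rpow_le0; lra|].
  rewrite rpow_pos_eq by lra; apply Rpower_1; lra.
Qed.

Lemma rpow_le c x y : 0 < c -> 0 <= x <= y -> rpow x c <= rpow y c.
Proof.
  intros Hc [H1 H2]. destruct (Req_dec x 0) as [->|Hn].
  - rewrite rpow_le0 by lra; apply rpow_nonneg.
  - rewrite !rpow_pos_eq by lra. apply Rle_Rpower_l; lra.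
Qed.

Lemma rpow_lt c x y : 0 < c -> 0 <= x < y -> rpow x c < rpow y c.
Proof.
  intros Hc [H1 H2]. destruct (Req_dec x 0) as [->|Hn].
  - rewrite rpow_le0 by lra; apply rpow_posv; lra.
  - rewrite !rpow_pos_eq by lra. apply Rlt_Rpower_l; lra.
Qed.

Lemma rpow_le_inv c x y : 0 < c -> 0 <= x -> 0 <= y -> rpow x c <= rpow y c -> x <= y.
Proof.
  intros Hc Hx Hy H. apply Rnot_lt_le; intro Hlt.
  pose proof (rpow_lt c y x Hc ltac:(lra)). lra.
Qed.

Lemma rpow_mul c x y : 0 <= x -> 0 <= y -> rpow (x * y) c = rpow x c * rpow y c.
Proof.
  intros Hx Hy. destruct (Req_dec x 0) as [->|Hnx].
  { rewrite Rmult_0_l, !(rpow_le0 0) by lra. ring. }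
  destruct (Req_dec y 0) as [->|Hny].
  { rewrite Rmult_0_r, !(rpow_le0 0) by lra. ring. }
  rewrite !rpow_pos_eq by nra. symmetry; apply Rpower_mult_distr; lra.
Qed.

Lemma rpow_ge_self r x : 1 <= r -> 1 <= x -> x <= rpow x r.
Proof.
  intros Hr Hx. rewrite rpow_pos_eq by lra.
  rewrite <- (Rpower_1 x) at 1 by lra. apply Rle_Rpower; lra.
Qed.

Lemma rpow_le_self r x : 1 <= r -> 0 <= x <= 1 -> rpow x r <= x.
Proof.
  intros Hr Hx. destruct (Req_dec x 0) as [->|Hn]; [rewrite rpow_le0; lra|].
  rewrite rpow_pos_eq by lra. unfold Rpower.
  assert (ln x <= 0). { rewrite <- ln_1. apply ln_le; lra. }
  rewrite <- (exp_ln x) at 2 by lra. apply exp_le_3 || (destruct (Req_dec (r * ln x) (ln x)) as [E|E]; [rewrite E; lra|left; apply exp_increasing; nra]).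
Qed.

Lemma rpow_plus_exp x a b : 0 < x -> rpow x (a + b) = rpow x a * rpow x b.
Proof. intros; rewrite !rpow_pos_eq by lra; apply Rpower_plus. Qed.

Lemma cont_eps (f : R -> R) x0 :
  (forall eps, 0 < eps -> exists del, 0 < del /\ forall x, Rabs (x - x0) < del -> Rabs (f x - f x0) < eps) ->
  continuity_pt f x0.
Proof.
  intros H eps Heps. destruct (H eps Heps) as [d [Hd Hd']]. exists d; split; auto.
  intros x [_ Hx]. apply Hd'. exact Hx.
Qed.

Lemma rpow_cont r x0 : 1 <= r -> continuity_pt (fun x => rpow x r) x0.
Proof.
  intros Hr. destruct (Rlt_le_dec 0 x0) as [Hp|Hn].
  - apply cont_eps. intros eps Heps.
    assert (Hc : continuity_pt (fun x => Rpower x r) x0).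
    { apply derivable_continuous_pt. exists (r * Rpower x0 (r - 1)). apply derivable_pt_lim_power; auto. }
    destruct (Hc eps Heps) as [d [Hd Hd']].
    exists (Rmin d x0). split; [apply Rmin_pos; lra|]. intros x Hx.
    assert (Hx1 : Rabs (x - x0) < d) by (eapply Rlt_le_trans; [exact Hx| apply Rmin_l]).
    assert (Hx2 : Rabs (x - x0) < x0) by (eapply Rlt_le_trans; [exact Hx| apply Rmin_r]).
    apply Rabs_def2 in Hx2.
    rewrite !rpow_pos_eq by lra. destruct (Req_dec x x0) as [->|Hne].
    + unfold Rminus; rewrite Rplus_opp_r, Rabs_R0; lra.
    + apply (Hd' x). split; [split; [exact I| auto]|]. exact Hx1.
  - destruct (Req_dec x0 0) as [->|Hneg].
    + apply cont_eps. intros eps Heps. exists (Rmin 1 eps). split; [apply Rmin_pos; lra|].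
      intros x Hx. rewrite (rpow_le0 0) by lra. rewrite Rminus_0_r in *.
      assert (Rabs x < 1) by (eapply Rlt_le_trans; [exact Hx| apply Rmin_l]).
      assert (Rabs x < eps) by (eapply Rlt_le_trans; [exact Hx| apply Rmin_r]).
      destruct (Rle_lt_dec x 0).
      * rewrite rpow_le0 by lra. rewrite Rabs_R0; lra.
      * rewrite Rabs_right by apply Rle_ge, rpow_nonneg.
        rewrite Rabs_right in * by lra.
        pose proof (rpow_le_self r x Hr ltac:(lra)). lra.
    + apply cont_eps. intros eps Heps. exists (- x0). split; [lra|].
      intros x Hx. apply Rabs_def2 in Hx. rewrite !rpow_le0 by lra.
      rewrite Rminus_0_r, Rabs_R0; lra.
Qed.

Lemma rpow_tangent_gen r s m : 1 <= r -> 0 <= s -> 0 < m ->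
  rpow m r + r * rpow m (r - 1) * (s - m) <= rpow s r /\
  (1 < r -> s <> m -> rpow m r + r * rpow m (r - 1) * (s - m) < rpow s r).
Proof.
  intros Hr Hs Hm.
  assert (Hmr : rpow m r = rpow m (r - 1) * m).
  { rewrite <- (rpow_1 m) at 3 by lra. rewrite <- rpow_plus_exp by lra. f_equal; ring. }
  assert (Hpos : 0 < rpow m (r - 1)) by (apply rpow_posv; lra).
  destruct (Req_dec s 0) as [->|Hs0].
  { rewrite (rpow_le0 0) by lra. rewrite Hmr.
    assert (0 < rpow m (r - 1) * m) by nra.
    split; intros.
    - assert (0 <= rpow m (r - 1) * m * (r - 1)) by (apply Rmult_le_pos; lra). nra.
    - assert (0 < rpow m (r - 1) * m * (r - 1)) by (apply Rmult_lt_0_compat; lra). nra. }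
  set (phi := fun x => Rpower x r - r * Rpower m (r - 1) * x).
  assert (Hd : forall c, 0 < c -> derivable_pt_lim phi c (r * Rpower c (r - 1) - r * Rpower m (r - 1))).
  { intros c Hc. unfold phi. apply derivable_pt_lim_minus.
    - apply derivable_pt_lim_power; auto.
    - replace (r * Rpower m (r - 1)) with (r * Rpower m (r - 1) * 1) at 2 by ring.
      apply derivable_pt_lim_scal. apply derivable_pt_lim_id. }
  assert (Key : phi m <= phi s /\ (1 < r -> s <> m -> phi m < phi s)).
  { destruct (Rtotal_order s m) as [Hlt|[Heq|Hgt]].
    - destruct (MVT_cor2 phi (fun c => r * Rpower c (r - 1) - r * Rpower m (r - 1)) s m Hlt
        ltac:(intros c Hc; apply Hd; lra)) as [c [Hc1 Hc2]].
      assert (Rpower c (r - 1) <= Rpower m (r - 1)) by (apply Rle_Rpower_l; lra).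
      split.
      + assert (0 <= r * (Rpower m (r - 1) - Rpower c (r - 1)) * (m - s)) by (apply Rmult_le_pos; [apply Rmult_le_pos|]; lra). lra.
      + intros Hr1 _. assert (Rpower c (r - 1) < Rpower m (r - 1)) by (apply Rlt_Rpower_l; lra).
        assert (0 < r * (Rpower m (r - 1) - Rpower c (r - 1)) * (m - s)) by (apply Rmult_lt_0_compat; [apply Rmult_lt_0_compat|]; lra). lra.
    - subst; split; [lra| intros _ H; congruence].
    - destruct (MVT_cor2 phi (fun c => r * Rpower c (r - 1) - r * Rpower m (r - 1)) m s Hgt
        ltac:(intros c Hc; apply Hd; lra)) as [c [Hc1 Hc2]].
      assert (Rpower m (r - 1) <= Rpower c (r - 1)) by (apply Rle_Rpower_l; lra).
      split.
      + assert (0 <= r * (Rpower c (r - 1) - Rpower m (r - 1)) * (s - m)) by (apply Rmult_le_pos; [apply Rmult_le_pos|]; lra). lra.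
      + intros Hr1 _. assert (Rpower m (r - 1) < Rpower c (r - 1)) by (apply Rlt_Rpower_l; lra).
        assert (0 < r * (Rpower c (r - 1) - Rpower m (r - 1)) * (s - m)) by (apply Rmult_lt_0_compat; [apply Rmult_lt_0_compat|]; lra). lra. }
  unfold phi in Key. assert (0 < s) by (destruct Hs; [auto| congruence]).
  rewrite !rpow_pos_eq in * by lra.
  destruct Key as [K1 K2]. split.
  - lra.
  - intros H1 H2. specialize (K2 H1 H2). lra.
Qed.

Lemma rpow_convex r l s1 s2 : 1 <= r -> 0 <= l <= 1 -> 0 <= s1 -> 0 <= s2 ->
  rpow (l * s1 + (1 - l) * s2) r <= l * rpow s1 r + (1 - l) * rpow s2 r.
Proof.
  intros Hr Hl H1 H2. set (m := l * s1 + (1 - l) * s2).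
  assert (0 <= m) by (unfold m; nra).
  destruct (Req_dec m 0) as [Hm0|Hm0].
  { rewrite Hm0, rpow_le0 by lra. pose proof (rpow_nonneg s1 r). pose proof (rpow_nonneg s2 r). nra. }
  destruct (rpow_tangent_gen r s1 m Hr H1 ltac:(lra)) as [T1 _].
  destruct (rpow_tangent_gen r s2 m Hr H2 ltac:(lra)) as [T2 _].
  assert (E : l * (s1 - m) + (1 - l) * (s2 - m) = 0) by (unfold m; ring).
  set (k := r * rpow m (r - 1)) in *.
  assert (l * (rpow m r + k * (s1 - m)) <= l * rpow s1 r) by (apply Rmult_le_compat_l; lra).
  assert ((1 - l) * (rpow m r + k * (s2 - m)) <= (1 - l) * rpow s2 r) by (apply Rmult_le_compat_l; lra).
  assert (l * (rpow m r + k * (s1 - m)) + (1 - l) * (rpow m r + k * (s2 - m)) = rpow m r).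
  { replace (l * (rpow m r + k * (s1 - m)) + (1 - l) * (rpow m r + k * (s2 - m))) with
      (rpow m r + k * (l * (s1 - m) + (1 - l) * (s2 - m))) by ring. rewrite E; ring. }
  lra.
Qed.

Lemma rpow_strict_mid r s1 s2 : 1 < r -> 0 <= s1 -> 0 <= s2 -> s1 <> s2 ->
  rpow ((s1 + s2) / 2) r < (rpow s1 r + rpow s2 r) / 2.
Proof.
  intros Hr H1 H2 Hn. set (m := (s1 + s2) / 2).
  assert (0 < m) by (unfold m; destruct (Req_dec s1 0); lra).
  destruct (rpow_tangent_gen r s1 m ltac:(lra) H1 ltac:(lra)) as [_ T1].
  destruct (rpow_tangent_gen r s2 m ltac:(lra) H2 ltac:(lra)) as [_ T2].
  specialize (T1 Hr ltac:(unfold m; lra)). specialize (T2 Hr ltac:(unfold m; lra)).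
  assert (E : (s1 - m) + (s2 - m) = 0) by (unfold m; field).
  set (k := r * rpow m (r - 1)) in *.
  assert (k * (s1 - m) + k * (s2 - m) = 0) by (rewrite <- Rmult_plus_distr_l, E; ring).
  lra.
Qed.

Lemma rpow_abs_convex r l u y1 y2 : 1 <= r -> 0 <= l <= 1 ->
  rpow (Rabs (u - (l * y1 + (1 - l) * y2))) r <=
  l * rpow (Rabs (u - y1)) r + (1 - l) * rpow (Rabs (u - y2)) r.
Proof.
  intros Hr Hl. eapply Rle_trans; [|apply rpow_convex; auto; apply Rabs_pos].
  apply rpow_le; [lra|]. split; [apply Rabs_pos|].
  replace (u - (l * y1 + (1 - l) * y2)) with (l * (u - y1) + (1 - l) * (u - y2)) by ring.
  eapply Rle_trans; [apply Rabs_triang|]. rewrite !Rabs_mult, (Rabs_right l), (Rabs_right (1 - l)) by lra.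
  lra.
Qed.

Lemma rpow_abs_strict r u y1 y2 : 1 < r -> y1 <> y2 ->
  rpow (Rabs (u - (y1 + y2) / 2)) r < (rpow (Rabs (u - y1)) r + rpow (Rabs (u - y2)) r) / 2.
Proof.
  intros Hr Hn. destruct (Req_dec (Rabs (u - y1)) (Rabs (u - y2))) as [E|E].
  - assert (u = (y1 + y2) / 2).
    { destruct (Rcase_abs (u - y1)), (Rcase_abs (u - y2));
      [rewrite (Rabs_left (u - y1)), (Rabs_left (u-y2)) in E by lra
      |rewrite (Rabs_left (u - y1)), (Rabs_right (u-y2)) in E by lra
      |rewrite (Rabs_right (u - y1)), (Rabs_left (u-y2)) in E by lra
      |rewrite (Rabs_right (u - y1)), (Rabs_right (u-y2)) in E by lra]; lra. }
    subst u. replace ((y1 + y2) / 2 - (y1 + y2) / 2) with 0 by ring.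
    rewrite Rabs_R0, rpow_le0 by lra. rewrite E.
    assert (0 < rpow (Rabs ((y1 + y2) / 2 - y2)) r).
    { apply rpow_posv. apply Rabs_pos_lt. lra. }
    lra.
  - eapply Rle_lt_trans; [|apply rpow_strict_mid; auto; apply Rabs_pos].
    apply rpow_le; [lra|]. split; [apply Rabs_pos|].
    replace (u - (y1 + y2) / 2) with ((u - y1) / 2 + (u - y2) / 2) by field.
    eapply Rle_trans; [apply Rabs_triang|]. unfold Rdiv. rewrite !Rabs_mult.
    rewrite (Rabs_right (/ 2)) by lra. lra.
Qed.

Lemma rpow_sum_bound r x y : 1 <= r -> 0 <= x -> 0 <= y ->
  rpow (x + y) r <= rpow 2 r * (rpow x r + rpow y r).
Proof.
  intros Hr Hx Hy.
  replace (x + y) with (2 * (/ 2 * x + (1 - / 2) * y)) by field.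
  rewrite rpow_mul by nra.
  pose proof (rpow_convex r (/ 2) x y Hr ltac:(lra) Hx Hy).
  pose proof (rpow_posv 2 r ltac:(lra)). pose proof (rpow_nonneg x r). pose proof (rpow_nonneg y r).
  apply Rmult_le_compat_l; [lra|]. lra.
Qed.

Lemma RI_equiv g c d v : RInt_is g c d v <-> (ex_RInt g c d /\ RInt g c d = v).
Proof.
  split.
  - intros [pr Hpr]. split. apply ex_RInt_Reals_1; exact pr. rewrite (RInt_Reals _ _ _ pr); auto.
  - intros [H1 H2]. exists (ex_RInt_Reals_0 _ _ _ H1). rewrite <- RInt_Reals; auto.
Qed.

Definition LocInt (g : R -> R) a b := forall c d, a < c -> c <= d -> d < b -> ex_RInt g c d.
Definition Bdd (g : R -> R) a b B := forall c d, a < c -> c <= d -> d < b -> RInt g c d <= B.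

Lemma compact_ints_iff g a b v : compact_ints g a b v <->
  exists c d, a < c /\ c <= d /\ d < b /\ ex_RInt g c d /\ RInt g c d = v.
Proof.
  split.
  - intros [c [d [H1 [H2 [H3 H4]]]]]. apply RI_equiv in H4. exists c, d; tauto.
  - intros [c [d [H1 [H2 [H3 [H4 H5]]]]]]. exists c, d. repeat split; auto. apply RI_equiv; auto.
Qed.

Lemma RInt_pt g c : RInt g c c = 0.
Proof. apply (RInt_point (V:=R_CompleteNormedModule)). Qed.

Lemma impInt_lub g a b B : a < b -> LocInt g a b -> Bdd g a b B ->
  is_lub (compact_ints g a b) (impInt g a b).
Proof.
  intros Hab HL HB. unfold impInt. apply Rsup_lub.
  - exists 0. apply compact_ints_iff. exists ((a+b)/2), ((a+b)/2).
    repeat split; try lra. apply HL; lra. apply RInt_pt.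
  - exists B. intros v Hv. apply compact_ints_iff in Hv.
    destruct Hv as [c [d [H1 [H2 [H3 [H4 H5]]]]]]. subst v. apply HB; auto.
Qed.

Lemma impInt_ge g a b B c d : a < b -> LocInt g a b -> Bdd g a b B ->
  a < c -> c <= d -> d < b -> RInt g c d <= impInt g a b.
Proof.
  intros Hab HL HB H1 H2 H3. destruct (impInt_lub g a b B Hab HL HB) as [Hu _].
  apply Hu. apply compact_ints_iff. exists c, d. repeat split; auto.
Qed.

Lemma impInt_le g a b M : a < b -> LocInt g a b -> Bdd g a b M -> impInt g a b <= M.
Proof.
  intros Hab HL HB. destruct (impInt_lub g a b M Hab HL HB) as [_ Hl].
  apply Hl. intros v Hv. apply compact_ints_iff in Hv.
  destruct Hv as [c [d [H1 [H2 [H3 [H4 H5]]]]]]. subst v. apply HB; auto.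
Qed.

Lemma impInt_nonneg g a b B : a < b -> LocInt g a b -> Bdd g a b B -> 0 <= impInt g a b.
Proof.
  intros Hab HL HB. rewrite <- (RInt_pt g ((a+b)/2)).
  apply (impInt_ge g a b B); auto; lra.
Qed.

Lemma impInt_ext g h a b : (forall t, a < t < b -> g t = h t) -> impInt g a b = impInt h a b.
Proof.
  intros H. unfold impInt. f_equal. apply functional_extensionality; intro v.
  apply propositional_extensionality. rewrite !compact_ints_iff.
  split; intros [c [d [H1 [H2 [H3 [H4 H5]]]]]]; exists c, d; repeat split; auto.
  - eapply ex_RInt_ext; [|exact H4]. intros x Hx. rewrite Rmin_left, Rmax_right in Hx by lra. apply H; lra.
  - rewrite <- H5. apply RInt_ext. intros x Hx. rewrite Rmin_left, Rmax_right in Hx by lra. symmetry; apply H; lra.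
  - eapply ex_RInt_ext; [|exact H4]. intros x Hx. rewrite Rmin_left, Rmax_right in Hx by lra. symmetry; apply H; lra.
  - rewrite <- H5. apply RInt_ext. intros x Hx. rewrite Rmin_left, Rmax_right in Hx by lra. apply H; lra.
Qed.

Lemma LocInt_ext g h a b : (forall t, a < t < b -> g t = h t) -> LocInt g a b -> LocInt h a b.
Proof.
  intros H HL c d H1 H2 H3. eapply ex_RInt_ext; [|apply HL; eauto].
  intros x Hx. rewrite Rmin_left, Rmax_right in Hx by lra. apply H; lra.
Qed.

Lemma Bdd_ext g h a b B : (forall t, a < t < b -> g t = h t) -> Bdd g a b B -> Bdd h a b B.
Proof.
  intros H HB c d H1 H2 H3. rewrite <- (HB c d H1 H2 H3). right. apply RInt_ext.
  intros x Hx. rewrite Rmin_left, Rmax_right in Hx by lra. symmetry; apply H; lra.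
Qed.

Lemma RInt_Chasles_R g a b c : ex_RInt g a b -> ex_RInt g b c -> RInt g a b + RInt g b c = RInt g a c.
Proof. intros H1 H2. apply (RInt_Chasles (V:=R_CompleteNormedModule)); auto. Qed.

Lemma ex_RInt_sub g c d c' d' : c <= c' -> c' <= d' -> d' <= d -> ex_RInt g c d -> ex_RInt g c' d'.
Proof.
  intros H1 H2 H3 H. apply (ex_RInt_Chasles_1 (V:=R_CompleteNormedModule)) with d; [lra|].
  apply (ex_RInt_Chasles_2 (V:=R_CompleteNormedModule)) with c; [lra|auto].
Qed.

Lemma RInt_nonneg g c d : c <= d -> ex_RInt g c d -> (forall t, c < t < d -> 0 <= g t) -> 0 <= RInt g c d.
Proof. intros; apply RInt_ge_0; auto. Qed.

Lemma RInt_sub_le g c d c' d' : c <= c' -> c' <= d' -> d' <= d -> ex_RInt g c d ->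
  (forall t, c < t < d -> 0 <= g t) -> RInt g c' d' <= RInt g c d.
Proof.
  intros H1 H2 H3 H Hp.
  assert (E1 := ex_RInt_sub g c d c c' ltac:(lra) H1 ltac:(lra) H).
  assert (E2 := ex_RInt_sub g c d c' d' H1 H2 H3 H).
  assert (E3 := ex_RInt_sub g c d d' d ltac:(lra) H3 ltac:(lra) H).
  assert (E4 : ex_RInt g c d') by (apply ex_RInt_sub with c d; lra || auto).
  rewrite <- (RInt_Chasles_R g c d' d E4 E3).
  rewrite <- (RInt_Chasles_R g c c' d') by auto.
  assert (0 <= RInt g c c') by (apply RInt_nonneg; auto; intros; apply Hp; lra).
  assert (0 <= RInt g d' d) by (apply RInt_nonneg; auto; intros; apply Hp; lra).
  lra.
Qed.

Lemma RInt_le_R g h c d : c <= d -> ex_RInt g c d -> ex_RInt h c d ->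
  (forall t, c < t < d -> g t <= h t) -> RInt g c d <= RInt h c d.
Proof. intros; apply RInt_le; auto. Qed.

Lemma RInt_const_R c d k : RInt (fun _ => k) c d = k * (d - c).
Proof. rewrite (RInt_const (V:=R_CompleteNormedModule)). simpl. unfold scal; simpl; unfold mult; simpl. ring. Qed.

Lemma RInt_plus_R g h c d : ex_RInt g c d -> ex_RInt h c d -> RInt (fun t => g t + h t) c d = RInt g c d + RInt h c d.
Proof. intros; apply (RInt_plus (V:=R_CompleteNormedModule)); auto. Qed.

Lemma ex_RInt_plus_R g h c d : ex_RInt g c d -> ex_RInt h c d -> ex_RInt (fun t => g t + h t) c d.
Proof. intros; apply (ex_RInt_plus (V:=R_NormedModule)); auto. Qed.

Lemma RInt_scal_R g c d k : ex_RInt g c d -> RInt (fun t => k * g t) c d = k * RInt g c d.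
Proof. intros; apply (RInt_scal (V:=R_CompleteNormedModule)); auto. Qed.

Lemma ex_RInt_scal_R g c d k : ex_RInt g c d -> ex_RInt (fun t => k * g t) c d.
Proof. intros; apply (ex_RInt_scal (V:=R_NormedModule)); auto. Qed.

Lemma ex_RInt_const_R c d k : ex_RInt (fun _ : R => k : R) c d.
Proof. apply (ex_RInt_const (V:=R_NormedModule)). Qed.

Lemma RInt_limit_right g c s K : c < s -> ex_RInt g c s ->
  (forall s', c <= s' < s -> RInt g c s' <= K) -> RInt g c s <= K.
Proof.
  intros Hcs HI HK. destruct (ex_RInt_ub g c s HI) as [M HM].
  rewrite Rmin_left, Rmax_right in HM by lra.
  assert (HM0 : 0 <= M) by (specialize (HM c ltac:(lra)); pose proof (norm_ge_0 (g c)); lra).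
  apply Rnot_lt_le; intro Hlt.
  set (eps := RInt g c s - K).
  set (s' := Rmax c (s - eps / (2 * (M + 1)))).
  assert (Hs'1 : c <= s') by apply Rmax_l.
  assert (Hep : 0 < eps / (2 * (M + 1))) by (unfold eps; apply Rdiv_lt_0_compat; lra).
  assert (Hs'2 : s' < s) by (unfold s'; apply Rmax_lub_lt; lra).
  assert (Hs'3 : s - s' <= eps / (2 * (M + 1))) by (unfold s'; pose proof (Rmax_r c (s - eps / (2 * (M + 1)))); lra).
  assert (E1 : ex_RInt g c s') by (apply ex_RInt_sub with c s; lra || auto).
  assert (E2 : ex_RInt g s' s) by (apply ex_RInt_sub with c s; lra || auto).
  pose proof (RInt_Chasles_R g c s' s E1 E2) as Ech.
  assert (B : RInt g s' s <= (s - s') * M).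
  { pose proof (abs_RInt_le_const g s' s M ltac:(lra) E2 ltac:(intros t Ht; apply HM; lra)).
    apply Rabs_le_between in H. lra. }
  specialize (HK s' ltac:(lra)).
  assert ((s - s') * M <= eps / (2 * (M + 1)) * M) by (apply Rmult_le_compat_r; lra).
  assert (eps / (2 * (M + 1)) * M < eps).
  { assert (Hq : eps / (2 * (M + 1)) * (M + 1) = eps / 2) by (field; lra).
    assert (eps / (2 * (M + 1)) * M <= eps / (2 * (M + 1)) * (M + 1)) by (apply Rmult_le_compat_l; lra).
    unfold eps in *; lra. }
  unfold eps in *. lra.
Qed.

Lemma RInt_limit_left g s d K : s < d -> ex_RInt g s d ->
  (forall s', s < s' <= d -> RInt g s' d <= K) -> RInt g s d <= K.
Proof.
  intros Hcs HI HK. destruct (ex_RInt_ub g s d HI) as [M HM].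
  rewrite Rmin_left, Rmax_right in HM by lra.
  assert (HM0 : 0 <= M) by (specialize (HM s ltac:(lra)); pose proof (norm_ge_0 (g s)); lra).
  apply Rnot_lt_le; intro Hlt.
  set (eps := RInt g s d - K).
  set (s' := Rmin d (s + eps / (2 * (M + 1)))).
  assert (Hs'1 : s' <= d) by apply Rmin_l.
  assert (Hep : 0 < eps / (2 * (M + 1))) by (unfold eps; apply Rdiv_lt_0_compat; lra).
  assert (Hs'2 : s < s') by (unfold s'; apply Rmin_glb_lt; lra).
  assert (Hs'3 : s' - s <= eps / (2 * (M + 1))) by (unfold s'; pose proof (Rmin_r d (s + eps / (2 * (M + 1)))); lra).
  assert (E1 : ex_RInt g s s') by (apply ex_RInt_sub with s d; lra || auto).
  assert (E2 : ex_RInt g s' d) by (apply ex_RInt_sub with s d; lra || auto).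
  pose proof (RInt_Chasles_R g s s' d E1 E2) as Ech.
  assert (B : RInt g s s' <= (s' - s) * M).
  { pose proof (abs_RInt_le_const g s s' M ltac:(lra) E1 ltac:(intros t Ht; apply HM; lra)).
    apply Rabs_le_between in H. lra. }
  specialize (HK s' ltac:(lra)).
  assert ((s' - s) * M <= eps / (2 * (M + 1)) * M) by (apply Rmult_le_compat_r; lra).
  assert (eps / (2 * (M + 1)) * M < eps).
  { assert (Hq : eps / (2 * (M + 1)) * (M + 1) = eps / 2) by (field; lra).
    assert (eps / (2 * (M + 1)) * M <= eps / (2 * (M + 1)) * (M + 1)) by (apply Rmult_le_compat_l; lra).
    unfold eps in *; lra. }
  unfold eps in *. lra.
Qed.

Section Split.
Variables (g : R -> R) (a s b : R).
Hypotheses (Has : a < s) (Hsb : s < b) (HL : LocInt g a b)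
  (Hnn : forall t, a < t < b -> 0 <= g t).
Variables (B1 B2 : R).
Hypotheses (HB1 : Bdd g a s B1) (HB2 : Bdd g s b B2).

Let HL1 : LocInt g a s. Proof. intros c d H1 H2 H3; apply HL; lra. Qed.
Let HL2 : LocInt g s b. Proof. intros c d H1 H2 H3; apply HL; lra. Qed.

Lemma split_bdd : Bdd g a b (impInt g a s + impInt g s b).
Proof.
  pose proof (impInt_nonneg g a s B1 Has HL1 HB1) as N1.
  pose proof (impInt_nonneg g s b B2 Hsb HL2 HB2) as N2.
  intros c d H1 H2 H3.
  destruct (Rlt_le_dec d s) as [Hds|Hsd].
  { pose proof (impInt_ge g a s B1 c d Has HL1 HB1 H1 H2 Hds). lra. }
  destruct (Rlt_le_dec s c) as [Hsc|Hcs].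
  { pose proof (impInt_ge g s b B2 c d Hsb HL2 HB2 Hsc H2 H3). lra. }
  assert (HI := HL c d H1 H2 H3).
  assert (E1 : ex_RInt g c s) by (apply ex_RInt_sub with c d; lra || auto).
  assert (E2 : ex_RInt g s d) by (apply ex_RInt_sub with c d; lra || auto).
  rewrite <- (RInt_Chasles_R g c s d E1 E2).
  assert (R1 : RInt g c s <= impInt g a s).
  { destruct (Req_dec c s) as [->|Hne]; [rewrite RInt_pt; lra|].
    apply RInt_limit_right; auto; [lra|]. intros s' Hs'.
    apply (impInt_ge g a s B1); auto; lra. }
  assert (R2 : RInt g s d <= impInt g s b).
  { destruct (Req_dec s d) as [->|Hne]; [rewrite RInt_pt; lra|].
    apply RInt_limit_left; auto; [lra|]. intros s' Hs'.
    apply (impInt_ge g s b B2); auto; lra. }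
  lra.
Qed.

Lemma impInt_split : impInt g a b = impInt g a s + impInt g s b.
Proof.
  assert (Hab : a < b) by lra.
  apply Rle_antisym.
  - apply impInt_le; auto. apply split_bdd.
  - pose proof split_bdd as HB.
    destruct (impInt_lub g a s B1 Has HL1 HB1) as [_ L1].
    destruct (impInt_lub g s b B2 Hsb HL2 HB2) as [_ L2].
    assert (Hb2 : forall c2 d2, s < c2 -> c2 <= d2 -> d2 < b -> RInt g c2 d2 <= impInt g a b - impInt g a s).
    { intros c2 d2 H1 H2 H3.
      assert (impInt g a s <= impInt g a b - RInt g c2 d2); [|lra].
      apply L1. intros v Hv. apply compact_ints_iff in Hv.
      destruct Hv as [c1 [d1 [G1 [G2 [G3 [G4 G5]]]]]]. subst v.
      assert (HI := HL c1 d2 G1 ltac:(lra) H3).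
      assert (E1 : ex_RInt g c1 d1) by (apply ex_RInt_sub with c1 d2; lra || auto).
      assert (E2 : ex_RInt g d1 d2) by (apply ex_RInt_sub with c1 d2; lra || auto).
      assert (E3 : ex_RInt g d1 c2) by (apply ex_RInt_sub with c1 d2; lra || auto).
      assert (E4 : ex_RInt g c2 d2) by (apply ex_RInt_sub with c1 d2; lra || auto).
      pose proof (RInt_Chasles_R g d1 c2 d2 E3 E4).
      pose proof (RInt_Chasles_R g c1 d1 d2 E1 E2).
      assert (0 <= RInt g d1 c2) by (apply RInt_nonneg; auto; [lra|intros; apply Hnn; lra]).
      pose proof (impInt_ge g a b _ c1 d2 Hab HL HB G1 ltac:(lra) H3).
      lra. }
    assert (impInt g s b <= impInt g a b - impInt g a s); [|lra].
    apply L2. intros v Hv. apply compact_ints_iff in Hv.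
    destruct Hv as [c [d [G1 [G2 [G3 [G4 G5]]]]]]. subst v. apply Hb2; auto.
Qed.

End Split.

Lemma impInt_mono g h a b B : a < b -> LocInt g a b -> LocInt h a b -> Bdd h a b B ->
  (forall t, a < t < b -> g t <= h t) -> impInt g a b <= impInt h a b.
Proof.
  intros Hab Hg Hh HB Hle. apply impInt_le; auto.
  intros c d H1 H2 H3. apply Rle_trans with (RInt h c d); [apply RInt_le_R; auto; intros; apply Hle; lra|].
  apply (impInt_ge h a b B); auto.
Qed.

Lemma Bdd_mono g h a b B : LocInt g a b -> LocInt h a b -> Bdd h a b B ->
  (forall t, a < t < b -> g t <= h t) -> Bdd g a b B.
Proof.
  intros Hg Hh HB Hle c d H1 H2 H3. apply Rle_trans with (RInt h c d); [apply RInt_le_R; auto; intros; apply Hle; lra|].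
  apply HB; auto.
Qed.

Lemma impInt_le_via g a b M : a < b -> LocInt g a b -> (forall t, a < t < b -> 0 <= g t) ->
  (forall c d, a < c -> c <= d -> d < b -> exists c' d', a < c' /\ c' <= c /\ d <= d' /\ d' < b /\ RInt g c' d' <= M) ->
  impInt g a b <= M.
Proof.
  intros Hab HL Hnn H. apply impInt_le; auto.
  intros c d H1 H2 H3. destruct (H c d H1 H2 H3) as [c' [d' [G1 [G2 [G3 [G4 G5]]]]]].
  eapply Rle_trans; [|exact G5]. apply RInt_sub_le; auto; try lra.
  apply HL; lra. intros; apply Hnn; lra.
Qed.

Lemma LocInt_sub g a b a' b' : LocInt g a b -> a <= a' -> b' <= b -> LocInt g a' b'.
Proof. intros H H1 H2 c d G1 G2 G3; apply H; lra. Qed.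

Lemma Bdd_sub g a b a' b' B : Bdd g a b B -> a <= a' -> b' <= b -> Bdd g a' b' B.
Proof. intros H H1 H2 c d G1 G2 G3; apply H; lra. Qed.

Section FS.
Variable F : R -> R.
Hypothesis HF : is_cdf F.
Variable r : R.
Hypothesis Hr : 1 <= r.

Definition gy (y : R) := fun t => rpow (Rabs (Finv F t - y)) r.

Lemma gy_nonneg y t : 0 <= gy y t.
Proof. apply rpow_nonneg. Qed.

Lemma gy_LocInt y : LocInt (gy y) 0 1.
Proof.
  intros c d H1 H2 H3.
  set (u := fun t => rpow (Rmax (Finv F t - y) 0) r).
  set (v := fun t => rpow (Rmax (y - Finv F t) 0) r).
  assert (Eu : ex_RInt u c d).
  { apply mono_ex_RInt; auto. intros s t G1 G2 G3. unfold u. apply rpow_le; [lra|].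
    pose proof (Finv_mono F HF s t ltac:(lra) G2 ltac:(lra)).
    split; [apply Rmax_r|]. apply Rle_max_compat_r. lra. }
  assert (Ev : ex_RInt v c d).
  { apply antimono_ex_RInt; auto. intros s t G1 G2 G3. unfold v. apply rpow_le; [lra|].
    pose proof (Finv_mono F HF s t ltac:(lra) G2 ltac:(lra)).
    split; [apply Rmax_r|]. apply Rle_max_compat_r. lra. }
  pose proof (ex_RInt_plus_R u v c d Eu Ev) as E.
  eapply ex_RInt_ext; [|exact E]. intros t _. unfold u, v, gy.
  destruct (Rle_dec 0 (Finv F t - y)).
  - rewrite Rmax_left by lra. rewrite Rmax_right by lra. rewrite (rpow_le0 0) by lra.
    rewrite Rabs_right by lra. apply Rplus_0_r.
  - rewrite Rmax_right by lra. rewrite Rmax_left by lra. rewrite (rpow_le0 0) by lra.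
    rewrite Rabs_left by lra. rewrite Rplus_0_l. f_equal. ring.
Qed.

Lemma mom_Bdd : finite_moment r F -> exists B, Bdd (gy 0) 0 1 B.
Proof.
  intros [B HB]. exists B. intros c d H1 H2 H3.
  apply HB. apply compact_ints_iff. exists c, d. repeat split; auto.
  - eapply ex_RInt_ext; [|apply (gy_LocInt 0); eauto]. intros t _. unfold gy. rewrite Rminus_0_r; auto.
  - apply RInt_ext. intros t _. unfold gy. rewrite Rminus_0_r; auto.
Qed.

Lemma gy_pt_bound y t : gy y t <= rpow 2 r * (gy 0 t + rpow (Rabs y) r).
Proof.
  unfold gy. rewrite Rminus_0_r. eapply Rle_trans; [|apply rpow_sum_bound; auto; apply Rabs_pos].
  apply rpow_le; [lra|]. split; [apply Rabs_pos|]. unfold Rminus. eapply Rle_trans; [apply Rabs_triang|].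
  rewrite Rabs_Ropp; lra.
Qed.

Lemma gy_Bdd y B : Bdd (gy 0) 0 1 B -> Bdd (gy y) 0 1 (rpow 2 r * (B + rpow (Rabs y) r)).
Proof.
  intros HB c d H1 H2 H3.
  assert (E0 := gy_LocInt 0 c d H1 H2 H3).
  assert (Ec := ex_RInt_const_R c d (rpow (Rabs y) r)).
  apply Rle_trans with (RInt (fun t => rpow 2 r * (gy 0 t + rpow (Rabs y) r)) c d).
  { apply RInt_le_R; auto. apply gy_LocInt; auto. apply ex_RInt_scal_R. apply ex_RInt_plus_R; auto.
    intros; apply gy_pt_bound. }
  rewrite RInt_scal_R by (apply ex_RInt_plus_R; auto).
  rewrite RInt_plus_R by auto. rewrite RInt_const_R.
  pose proof (HB c d H1 H2 H3). pose proof (rpow_posv 2 r ltac:(lra)). pose proof (rpow_nonneg (Rabs y) r).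
  apply Rmult_le_compat_l; [lra|]. assert (rpow (Rabs y) r * (d - c) <= rpow (Rabs y) r) by nra. lra.
Qed.

Definition K a b y := impInt (gy y) a b.

Lemma gy_Bdd_ex y : finite_moment r F -> exists B, Bdd (gy y) 0 1 B.
Proof. intros Hm. destruct (mom_Bdd Hm) as [B HB]. eexists; apply gy_Bdd; eauto. Qed.

End FS.

Section Disc.
Variables (n : nat) (p x : nat -> R).
Hypothesis Hp : forall i, (1 <= i <= n)%nat -> 0 <= p i.
Hypothesis Hx : in_Xi n x.

Lemma Psum_mono i k : (i <= k <= n)%nat -> Psum p i <= Psum p k.
Proof.
  intros [H1 H2]. induction k as [|k IH].
  - assert (i = 0)%nat by lia. subst; lra.
  - destruct (Nat.eq_dec i (S k)) as [->|Hne]; [lra|].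
    simpl. specialize (IH ltac:(lia) ltac:(lia)). pose proof (Hp (S k) ltac:(lia)). lra.
Qed.

Lemma Psum_nonneg k : (k <= n)%nat -> 0 <= Psum p k.
Proof. intros; change 0 with (Psum p 0); apply Psum_mono; lia. Qed.

Lemma Xi_mono i j : (1 <= i)%nat -> (i <= j <= n)%nat -> x i <= x j.
Proof.
  intros H1 [H2 H3]. induction j as [|j IH].
  - lia.
  - destruct (Nat.eq_dec i (S j)) as [->|Hne]; [lra|].
    specialize (IH ltac:(lia) ltac:(lia)). pose proof (Hx j ltac:(lia) ltac:(lia)). lra.
Qed.

Lemma disc_all_le k z : (forall j, (1 <= j <= k)%nat -> x j <= z) -> disc_cdf k p x z = Psum p k.
Proof.
  induction k as [|k IH]; intros H; simpl; auto.
  rewrite IH by (intros; apply H; lia). destruct (Rle_dec (x (S k)) z); auto.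
  exfalso; apply n0; apply H; lia.
Qed.

Lemma disc_mono_k i k z : (i <= k <= n)%nat -> disc_cdf i p x z <= disc_cdf k p x z.
Proof.
  intros [H1 H2]. induction k as [|k IH].
  - assert (i = 0)%nat by lia. subst; lra.
  - destruct (Nat.eq_dec i (S k)) as [->|Hne]; [lra|].
    simpl. specialize (IH ltac:(lia) ltac:(lia)). pose proof (Hp (S k) ltac:(lia)).
    destruct (Rle_dec (x (S k)) z); lra.
Qed.

Lemma disc_above i k z : (i <= k)%nat -> (forall j, (i < j <= k)%nat -> z < x j) ->
  disc_cdf k p x z = disc_cdf i p x z.
Proof.
  intros H1 H. induction k as [|k IH].
  - assert (i = 0)%nat by lia. subst; auto.
  - destruct (Nat.eq_dec i (S k)) as [->|Hne]; [auto|].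
    simpl. rewrite IH by (lia || (intros; apply H; lia)).
    destruct (Rle_dec (x (S k)) z); [|ring]. specialize (H (S k) ltac:(lia)). lra.
Qed.

Lemma disc_le_Psum k z : (k <= n)%nat -> disc_cdf k p x z <= Psum p k.
Proof.
  induction k as [|k IH]; intros H; simpl; [lra|].
  specialize (IH ltac:(lia)). pose proof (Hp (S k) ltac:(lia)). destruct (Rle_dec (x (S k)) z); lra.
Qed.

Lemma Finv_disc i t : (1 <= i <= n)%nat -> Psum p (i - 1) <= t < Psum p i ->
  Finv (disc_cdf n p x) t = x i.
Proof.
  intros Hi Ht. set (S := fun z => disc_cdf n p x z <= t).
  assert (HS : forall z, S z <-> z < x i).
  { intros z; unfold S; split.
    - intros Hz. apply Rnot_le_lt; intro Hle.
      pose proof (disc_mono_k i n z ltac:(lia)).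
      rewrite (disc_all_le i z) in H by (intros j Hj; pose proof (Xi_mono j i ltac:(lia) ltac:(lia)); lra).
      lra.
    - intros Hz. rewrite (disc_above (i - 1) n z) by (lia || (intros j Hj; pose proof (Xi_mono i j ltac:(lia) ltac:(lia)); lra)).
      pose proof (disc_le_Psum (i - 1) z ltac:(lia)). lra. }
  assert (L1 : is_lub S (x i)).
  { split.
    - intros z Hz; apply HS in Hz; lra.
    - intros b Hb. apply Rnot_lt_le; intro Hlt.
      assert (S ((b + x i) / 2)) by (apply HS; lra). specialize (Hb _ H). lra. }
  assert (L2 : is_lub S (Rsup S)).
  { apply Rsup_lub. exists (x i - 1); apply HS; lra. exists (x i); apply L1. }
  unfold Finv. fold S. eapply is_lub_u; eauto.
Qed.

End Disc.

Fixpoint BSum (p : nat -> R) (C : R -> R -> R -> R) (x : nat -> R) (k : nat) : R :=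
  match k with
  | O => 0
  | S j => BSum p C x j + (if Rlt_dec (Psum p j) (Psum p (S j)) then C (Psum p j) (Psum p (S j)) (x (S j)) else 0)
  end.

Lemma BSum_zero p C x k : (forall j, (1 <= j <= k)%nat -> 0 <= p j) -> Psum p k = 0 -> BSum p C x k = 0.
Proof.
  induction k as [|k IH]; intros Hp Hk; simpl; auto.
  assert (0 <= Psum p k) by (apply (Psum_nonneg k p (fun j H => Hp j ltac:(lia))); lia).
  simpl in Hk. pose proof (Hp (S k) ltac:(lia)).
  rewrite IH; auto; [|intros; apply Hp; lia|lra].
  destruct (Rlt_dec (Psum p k) (Psum p k + p (S k))); lra.
Qed.

Section Decomp.
Variable F : R -> R.
Hypothesis HF : is_cdf F.
Variable r : R.
Hypothesis Hr : 1 <= r.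
Hypothesis Hmom : finite_moment r F.
Variables (n : nat) (p x : nat -> R).
Hypothesis HPi : in_Pi n p.
Hypothesis Hx : in_Xi n x.

Let Hp : forall i, (1 <= i <= n)%nat -> 0 <= p i.
Proof. apply HPi. Qed.

Let hh := fun t => rpow (Rabs (Finv (disc_cdf n p x) t - Finv F t)) r.

Lemma hh_block i : (1 <= i <= n)%nat -> forall t, Psum p (i - 1) <= t < Psum p i ->
  hh t = gy F r (x i) t.
Proof.
  intros Hi t Ht. unfold hh, gy. rewrite (Finv_disc n p x Hp Hx i t Hi Ht).
  rewrite Rabs_minus_sym. auto.
Qed.

Lemma gyK_props y a b : 0 <= a -> a < b -> b <= 1 ->
  LocInt (gy F r y) a b /\ Bdd (gy F r y) a b (K F r a b y).
Proof.
  intros H1 H2 H3. destruct (gy_Bdd_ex F HF r Hr y Hmom) as [B HB].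
  assert (HL : LocInt (gy F r y) a b) by (eapply LocInt_sub; [apply gy_LocInt; auto|lra|lra]).
  split; auto. intros c d G1 G2 G3. unfold K. apply (impInt_ge _ a b B); auto. eapply Bdd_sub; eauto.
Qed.

Definition Inv k := 0 < Psum p k ->
  (forall c d, 0 < c -> c <= d -> d <= Psum p k -> d < 1 -> ex_RInt hh c d) /\
  Bdd hh 0 (Psum p k) (BSum p (K F r) x k) /\
  impInt hh 0 (Psum p k) = BSum p (K F r) x k.

Lemma Inv_all k : (k <= n)%nat -> Inv k.
Proof.
  induction k as [|k IH]; intros Hk.
  - intros H; simpl in H; lra.
  - specialize (IH ltac:(lia)). intros HPk.
    assert (Hpk := Hp (S k) ltac:(lia)).
    assert (HP0 := Psum_nonneg n p Hp k ltac:(lia)).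
    assert (HP1 : Psum p (S k) <= 1).
    { destruct HPi as [_ E]. rewrite <- E. apply (Psum_mono n p Hp); lia. }
    simpl in HPk |- *.
    destruct (Rlt_dec (Psum p k) (Psum p k + p (S k))) as [Hlt|Hnlt].
    2: { assert (p (S k) = 0) by lra. rewrite H, Rplus_0_r in *. rewrite Rplus_0_r. apply IH; auto. }
    set (a := Psum p k) in *. set (b := a + p (S k)) in *.
    assert (Hbdef : b = a + p (S k)) by reflexivity. clearbody b.
    assert (Hadef : a = Psum p k) by reflexivity. clearbody a.
    assert (Hblk : forall t, a <= t < b -> hh t = gy F r (x (S k)) t).
    { intros t Ht. apply hh_block; [lia|]. replace (S k - 1)%nat with k by lia. simpl. lra. }
    assert (HP1' : b <= 1) by (simpl in HP1; lra).
    destruct (gyK_props (x (S k)) a b HP0 Hlt HP1') as [GL GB].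
    assert (Eblk : forall c d, a <= c -> 0 < c -> c <= d -> d <= b -> d < 1 -> ex_RInt hh c d).
    { intros c d G1 G2 G3 G4 G5. eapply ex_RInt_ext; [|apply (gy_LocInt F HF r Hr (x (S k))); eauto; lra].
      intros t Ht. rewrite Rmin_left, Rmax_right in Ht by lra. symmetry; apply Hblk; lra. }
    destruct (Req_dec a 0) as [Ha0|Ha0].
    + rewrite (BSum_zero p (K F r) x k) by (first [lra | intros; apply Hp; lia]).
      rewrite Rplus_0_l. subst a. rewrite Ha0 in *.
      assert (Ehh : impInt hh 0 b = K F r 0 b (x (S k))).
      { unfold K. apply impInt_ext. intros t Ht; apply Hblk; lra. }
      split; [|split].
      * intros c d G1 G2 G3 G4. apply Eblk; lra.
      * eapply Bdd_ext; [|exact GB]. intros t Ht; symmetry; apply Hblk; lra.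
      * exact Ehh.
    + assert (Hapos : 0 < a) by lra. destruct (IH ltac:(lra)) as [IL [IB IE]]. rewrite <- Hadef in IL, IB, IE.
      assert (HLb : LocInt hh 0 b).
      { intros c d G1 G2 G3.
        destruct (Rle_lt_dec d a) as [Hda|Had]; [apply IL; lra|].
        destruct (Rle_lt_dec a c) as [Hac|Hca]; [apply Eblk; lra|].
        apply (ex_RInt_Chasles (V:=R_NormedModule)) with a; [apply IL; lra| apply Eblk; lra]. }
      assert (HBab : Bdd hh a b (K F r a b (x (S k)))).
      { eapply Bdd_ext; [|exact GB]. intros t Ht; symmetry; apply Hblk; lra. }
      assert (Hnn : forall t, 0 < t < b -> 0 <= hh t) by (intros; apply rpow_nonneg).
      pose proof (impInt_split hh 0 a b Hapos Hlt HLb Hnn _ _ IB HBab) as Esplit.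
      pose proof (split_bdd hh 0 a b Hapos Hlt HLb _ _ IB HBab) as Bsplit.
      assert (Eab : impInt hh a b = K F r a b (x (S k))).
      { unfold K. apply impInt_ext. intros t Ht; apply Hblk; lra. }
      rewrite IE, Eab in Esplit, Bsplit.
      split; [|split]; auto.
      intros c d G1 G2 G3 G4.
      destruct (Rle_lt_dec d a) as [Hda|Had]; [apply IL; lra|].
      destruct (Rle_lt_dec a c) as [Hac|Hca]; [apply Eblk; lra|].
      apply (ex_RInt_Chasles (V:=R_NormedModule)) with a; [apply IL; lra| apply Eblk; lra].
Qed.

Lemma decomp : impInt hh 0 1 = BSum p (K F r) x n.
Proof.
  destruct HPi as [_ E]. pose proof (Inv_all n (le_n n)) as I. unfold Inv in I.
  rewrite E in I. destruct (I ltac:(lra)) as [_ [_ H]]. exact H.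
Qed.

End Decomp.

Lemma d_r_decomp F r n p x : is_cdf F -> 1 <= r -> finite_moment r F -> in_Pi n p -> in_Xi n x ->
  d_r r (disc_cdf n p x) F = rpow (BSum p (K F r) x n) (1 / r).
Proof.
  intros HF Hr Hm HPi Hx. unfold d_r. f_equal. apply decomp; auto.
Qed.

Lemma RInt_le_shift g1 g2 c d k : c <= d -> ex_RInt g1 c d -> ex_RInt g2 c d ->
  (forall t, c < t < d -> g1 t <= g2 t + k) -> RInt g1 c d <= RInt g2 c d + k * (d - c).
Proof.
  intros Hcd E1 E2 H.
  rewrite <- RInt_const_R. rewrite <- RInt_plus_R by (auto; apply ex_RInt_const_R).
  apply RInt_le_R; auto. apply ex_RInt_plus_R; auto; apply ex_RInt_const_R.
Qed.

Lemma RInt_two_piece g1 g2 c t1 d al be : c <= t1 -> t1 <= d -> ex_RInt g1 c d -> ex_RInt g2 c d ->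
  (forall t, c < t < t1 -> g1 t <= g2 t + al) -> (forall t, t1 < t < d -> g1 t <= g2 t + be) ->
  RInt g1 c d <= RInt g2 c d + al * (t1 - c) + be * (d - t1).
Proof.
  intros H1 H2 E1 E2 P1 P2.
  assert (A1 : ex_RInt g1 c t1) by (apply ex_RInt_sub with c d; lra || auto).
  assert (A2 : ex_RInt g1 t1 d) by (apply ex_RInt_sub with c d; lra || auto).
  assert (B1 : ex_RInt g2 c t1) by (apply ex_RInt_sub with c d; lra || auto).
  assert (B2 : ex_RInt g2 t1 d) by (apply ex_RInt_sub with c d; lra || auto).
  rewrite <- (RInt_Chasles_R g1 c t1 d A1 A2), <- (RInt_Chasles_R g2 c t1 d B1 B2).
  pose proof (RInt_le_shift g1 g2 c t1 al H1 A1 B1 P1).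
  pose proof (RInt_le_shift g1 g2 t1 d be H2 A2 B2 P2). lra.
Qed.

Section Median.
Variable F : R -> R.
Hypothesis HF : is_cdf F.
Hypothesis Hmom : finite_moment 1 F.
Variables a b : R.
Hypotheses (Ha : 0 <= a) (Hab : a < b) (Hb : b <= 1).
Let m := (a + b) / 2.
Let f := Finv F.

Let g1 y t : gy F 1 y t = Rabs (f t - y).
Proof. unfold gy. apply rpow_1, Rabs_pos. Qed.

Let GL y : LocInt (gy F 1 y) a b.
Proof. eapply LocInt_sub; [apply gy_LocInt; auto; lra|lra|lra]. Qed.

Let GB y : exists B, Bdd (gy F 1 y) a b B.
Proof. destruct (gy_Bdd_ex F HF 1 ltac:(lra) y Hmom) as [B HB]. exists B. eapply Bdd_sub; eauto. Qed.

Let Kge y c d : a < c -> c <= d -> d < b -> RInt (gy F 1 y) c d <= K F 1 a b y.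
Proof. intros. destruct (GB y) as [B HB]. unfold K. apply (impInt_ge _ a b B); auto. Qed.

Let sym_enl c0 d0 u : a < c0 -> c0 <= d0 -> d0 < b -> a < u < b ->
  exists c d, a < c /\ c <= c0 /\ d0 <= d /\ d < b /\ c < u /\ u < d /\ c + d = a + b.
Proof.
  intros H1 H2 H3 Hu. set (e := Rmin (Rmin (c0 - a) (b - d0)) (Rmin ((u - a) / 2) ((b - u) / 2))).
  assert (He1 : e <= c0 - a) by (unfold e; repeat (apply Rmin_Rle || apply Rmin_l || idtac);
    eapply Rle_trans; [apply Rmin_l|apply Rmin_l]).
  assert (He2 : e <= b - d0) by (unfold e; eapply Rle_trans; [apply Rmin_l|apply Rmin_r]).
  assert (He3 : e <= (u - a) / 2) by (unfold e; eapply Rle_trans; [apply Rmin_r|apply Rmin_l]).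
  assert (He4 : e <= (b - u) / 2) by (unfold e; eapply Rle_trans; [apply Rmin_r|apply Rmin_r]).
  assert (He0 : 0 < e) by (unfold e; repeat apply Rmin_pos; lra).
  exists (a + e), (b - e). repeat split; lra.
Qed.

Lemma median_min y : m <= F y -> (forall w, w < y -> F w <= m) -> forall z, K F 1 a b y <= K F 1 a b z.
Proof.
  intros Hy1 Hy2 z. unfold K at 1. apply impInt_le_via; auto; [intros; apply gy_nonneg|].
  intros c0 d0 H1 H2 H3. destruct (sym_enl c0 d0 m H1 H2 H3 ltac:(unfold m; lra)) as [c [d [G1 [G2 [G3 [G4 [G5 [G6 G7]]]]]]]].
  exists c, d. repeat split; auto.
  eapply Rle_trans; [|apply (Kge z c d); lra].
  assert (Ey : ex_RInt (gy F 1 y) c d) by (apply GL; lra).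
  assert (Ez : ex_RInt (gy F 1 z) c d) by (apply GL; lra).
  destruct (Rle_lt_dec y z) as [Hyz|Hzy].
  - pose proof (RInt_two_piece (gy F 1 y) (gy F 1 z) c m d (- (z - y)) (z - y) ltac:(lra) ltac:(lra) Ey Ez) as T.
    assert (T1 : forall t, c < t < m -> gy F 1 y t <= gy F 1 z t + - (z - y)).
    { intros t Ht. rewrite !g1. assert (f t <= y) by (apply Finv_le_of; auto; lra).
      rewrite !Rabs_left1 by lra. lra. }
    assert (T2 : forall t, m < t < d -> gy F 1 y t <= gy F 1 z t + (z - y)).
    { intros t Ht. rewrite !g1. pose proof (Rabs_triang (f t - z) (z - y)).
      replace (f t - z + (z - y)) with (f t - y) in H by ring. rewrite (Rabs_right (z - y)) in H by lra. lra. }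
    specialize (T T1 T2). assert (m - c = d - m) by (unfold m; lra).
    assert (- (z - y) * (m - c) + (z - y) * (d - m) = 0) by (rewrite H; ring). lra.
  - pose proof (RInt_two_piece (gy F 1 y) (gy F 1 z) c m d (y - z) (- (y - z)) ltac:(lra) ltac:(lra) Ey Ez) as T.
    assert (T2 : forall t, m < t < d -> gy F 1 y t <= gy F 1 z t + - (y - z)).
    { intros t Ht. rewrite !g1. assert (y <= f t).
      { apply Rnot_lt_le; intro Hlt. set (w := (f t + y) / 2).
        assert (F w <= m) by (apply Hy2; unfold w; lra).
        assert (w <= f t) by (apply Finv_ge_of; auto; lra). unfold w in *; lra. }
      rewrite !Rabs_right by lra. lra. }
    assert (T1 : forall t, c < t < m -> gy F 1 y t <= gy F 1 z t + (y - z)).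
    { intros t Ht. rewrite !g1. pose proof (Rabs_triang (f t - z) (z - y)).
      replace (f t - z + (z - y)) with (f t - y) in H by ring. rewrite (Rabs_left (z - y)) in H by lra. lra. }
    specialize (T T1 T2). assert (m - c = d - m) by (unfold m; lra).
    assert ((y - z) * (m - c) + - (y - z) * (d - m) = 0) by (rewrite H; ring). lra.
Qed.

Lemma median_nec y : (forall z, K F 1 a b y <= K F 1 a b z) -> m <= F y /\ (forall w, w < y -> F w <= m).
Proof.
  intros Hmin. split.
  - apply Rnot_lt_le; intro Hlt.
    set (t1 := (Rmax (F y) a + m) / 2).
    assert (Ht1a : a < t1) by (unfold t1, m; pose proof (Rmax_r (F y) a); pose proof (Rmax_l (F y) a); destruct (Rmax_Rle (F y) a (Rmax (F y) a)); lra).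
    assert (HFy : F y < t1) by (unfold t1; pose proof (Rmax_l (F y) a); pose proof (Rmax_r (F y) a);
      unfold Rmax in *; destruct (Rle_dec (F y) a); lra).
    assert (Ht1m : t1 < m) by (unfold t1; unfold Rmax; destruct (Rle_dec (F y) a); unfold m in *; lra).
    set (z := f t1).
    assert (Hyz : y < z) by (apply Finv_gt_of; auto; unfold m in *; lra).
    assert (Kz : K F 1 a b z <= K F 1 a b y - (z - y) * (2 * (m - t1))).
    { unfold K at 1. apply impInt_le_via; auto; [intros; apply gy_nonneg|].
      intros c0 d0 H1 H2 H3. destruct (sym_enl c0 d0 t1 H1 H2 H3 ltac:(unfold m in *; lra)) as [c [d [G1 [G2 [G3 [G4 [G5 [G6 G7]]]]]]]].
      exists c, d. repeat split; auto.
      assert (Ey : ex_RInt (gy F 1 y) c d) by (apply GL; lra).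
      assert (Ez : ex_RInt (gy F 1 z) c d) by (apply GL; lra).
      pose proof (RInt_two_piece (gy F 1 z) (gy F 1 y) c t1 d (z - y) (- (z - y)) ltac:(lra) ltac:(lra) Ez Ey) as T.
      assert (T1 : forall t, c < t < t1 -> gy F 1 z t <= gy F 1 y t + (z - y)).
      { intros t Ht. rewrite !g1. pose proof (Rabs_triang (f t - y) (y - z)).
        replace (f t - y + (y - z)) with (f t - z) in H by ring. rewrite (Rabs_left (y - z)) in H by lra. lra. }
      assert (T2 : forall t, t1 < t < d -> gy F 1 z t <= gy F 1 y t + - (z - y)).
      { intros t Ht. rewrite !g1. assert (z <= f t) by (apply Finv_mono; auto; unfold m in *; lra).
        rewrite !Rabs_right by lra. lra. }
      specialize (T T1 T2). pose proof (Kge y c d ltac:(lra) ltac:(lra) ltac:(lra)).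
      assert ((z - y) * (t1 - c) + - (z - y) * (d - t1) = - ((z - y) * (2 * (m - t1)))).
      { unfold m in *. replace (d - t1) with (a + b - c - t1) by lra. field. }
      lra. }
    specialize (Hmin z). assert (0 < (z - y) * (2 * (m - t1))) by (apply Rmult_lt_0_compat; lra). lra.
  - intros w Hw. apply Rnot_lt_le; intro Hlt.
    set (t1 := (m + Rmin (F w) b) / 2).
    assert (Ht1b : t1 < b) by (unfold t1, m; unfold Rmin; destruct (Rle_dec (F w) b); lra).
    assert (HFw : t1 < F w) by (unfold t1; unfold Rmin; destruct (Rle_dec (F w) b); lra).
    assert (Ht1m : m < t1) by (unfold t1; unfold Rmin; destruct (Rle_dec (F w) b); unfold m in *; lra).
    rename w into z.
    assert (Kz : K F 1 a b z <= K F 1 a b y - (y - z) * (2 * (t1 - m))).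
    { unfold K at 1. apply impInt_le_via; auto; [intros; apply gy_nonneg|].
      intros c0 d0 H1 H2 H3. destruct (sym_enl c0 d0 t1 H1 H2 H3 ltac:(unfold m in *; lra)) as [c [d [G1 [G2 [G3 [G4 [G5 [G6 G7]]]]]]]].
      exists c, d. repeat split; auto.
      assert (Ey : ex_RInt (gy F 1 y) c d) by (apply GL; lra).
      assert (Ez : ex_RInt (gy F 1 z) c d) by (apply GL; lra).
      pose proof (RInt_two_piece (gy F 1 z) (gy F 1 y) c t1 d (- (y - z)) (y - z) ltac:(lra) ltac:(lra) Ez Ey) as T.
      assert (T1 : forall t, c < t < t1 -> gy F 1 z t <= gy F 1 y t + - (y - z)).
      { intros t Ht. rewrite !g1. assert (f t <= z) by (apply Finv_le_of; auto; unfold m in *; lra).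
        rewrite !Rabs_left1 by lra. lra. }
      assert (T2 : forall t, t1 < t < d -> gy F 1 z t <= gy F 1 y t + (y - z)).
      { intros t Ht. rewrite !g1. pose proof (Rabs_triang (f t - y) (y - z)).
        replace (f t - y + (y - z)) with (f t - z) in H by ring. rewrite (Rabs_right (y - z)) in H by lra. lra. }
      specialize (T T1 T2). pose proof (Kge y c d ltac:(lra) ltac:(lra) ltac:(lra)).
      assert (- (y - z) * (t1 - c) + (y - z) * (d - t1) = - ((y - z) * (2 * (t1 - m)))).
      { unfold m in *. replace (d - t1) with (a + b - c - t1) by lra. field. }
      lra. }
    specialize (Hmin z). assert (0 < (y - z) * (2 * (t1 - m))) by (apply Rmult_lt_0_compat; lra). lra.
Qed.

End Median.

Lemma convex_cont (phi : R -> R) y :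
  (forall l u v, 0 <= l <= 1 -> phi (l * u + (1 - l) * v) <= l * phi u + (1 - l) * phi v) ->
  continuity_pt phi y.
Proof.
  intros Hc. set (D := Rabs (phi (y + 1) - phi y) + Rabs (phi y - phi (y - 1))).
  assert (HD : 0 <= D) by (unfold D; pose proof (Rabs_pos (phi (y + 1) - phi y)); pose proof (Rabs_pos (phi y - phi (y - 1))); lra).
  assert (Hb : forall e, 0 <= e <= 1 -> Rabs (phi (y + e) - phi y) <= e * D /\ Rabs (phi (y - e) - phi y) <= e * D).
  { intros e Hh. destruct (Req_dec e 0) as [->|Hh0].
    { rewrite Rplus_0_r, Rminus_0_r, Rminus_diag, Rabs_R0. lra. }
    assert (U1 : phi (y + e) <= (1 - e) * phi y + e * phi (y + 1)).
    { replace (y + e) with (e * (y + 1) + (1 - e) * y) by ring. rewrite (Rplus_comm ((1 - e) * phi y)). apply Hc; lra. }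
    assert (L1 : phi y <= / (1 + e) * phi (y + e) + (1 - / (1 + e)) * phi (y - 1)).
    { replace y with (/ (1 + e) * (y + e) + (1 - / (1 + e)) * (y - 1)) at 1 by (field; lra).
      apply Hc. split. left; apply Rinv_0_lt_compat; lra. rewrite <- Rinv_1. apply Rinv_le_contravar; lra. }
    assert (L1' : (1 + e) * phi y <= phi (y + e) + e * phi (y - 1)).
    { apply Rmult_le_compat_l with (r := 1 + e) in L1; [|lra].
      replace ((1 + e) * (/ (1 + e) * phi (y + e) + (1 - / (1 + e)) * phi (y - 1))) with (phi (y + e) + e * phi (y - 1)) in L1 by (field; lra). lra. }
    assert (U2 : phi (y - e) <= (1 - e) * phi y + e * phi (y - 1)).
    { replace (y - e) with (e * (y - 1) + (1 - e) * y) by ring. rewrite (Rplus_comm ((1 - e) * phi y)). apply Hc; lra. }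
    assert (L2 : phi y <= / (1 + e) * phi (y - e) + (1 - / (1 + e)) * phi (y + 1)).
    { replace y with (/ (1 + e) * (y - e) + (1 - / (1 + e)) * (y + 1)) at 1 by (field; lra).
      apply Hc. split. left; apply Rinv_0_lt_compat; lra. rewrite <- Rinv_1. apply Rinv_le_contravar; lra. }
    assert (L2' : (1 + e) * phi y <= phi (y - e) + e * phi (y + 1)).
    { apply Rmult_le_compat_l with (r := 1 + e) in L2; [|lra].
      replace ((1 + e) * (/ (1 + e) * phi (y - e) + (1 - / (1 + e)) * phi (y + 1))) with (phi (y - e) + e * phi (y + 1)) in L2 by (field; lra). lra. }
    assert (A1 := Rabs_pos (phi (y + 1) - phi y)). assert (A2 := Rabs_pos (phi y - phi (y - 1))).
    assert (A3 := Rle_abs (phi (y + 1) - phi y)). assert (A4 := Rle_abs (phi y - phi (y - 1))).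
    assert (A5 := Rabs_maj2 (phi (y + 1) - phi y)). assert (A6 := Rabs_maj2 (phi y - phi (y - 1))).
    unfold D. split; apply Rabs_le; split; nra. }
  apply cont_eps. intros eps Heps. exists (Rmin 1 (eps / (D + 1))). split.
  { apply Rmin_pos; [lra|]. apply Rdiv_lt_0_compat; lra. }
  intros x Hx. assert (Hx1 : Rabs (x - y) < 1) by (eapply Rlt_le_trans; [exact Hx|apply Rmin_l]).
  assert (Hx2 : Rabs (x - y) < eps / (D + 1)) by (eapply Rlt_le_trans; [exact Hx|apply Rmin_r]).
  assert (Hk : Rabs (x - y) * D < eps).
  { apply Rle_lt_trans with (eps / (D + 1) * D). apply Rmult_le_compat_r; lra.
    apply Rlt_le_trans with (eps / (D + 1) * (D + 1)). apply Rmult_lt_compat_l; [apply Rdiv_lt_0_compat|]; lra.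
    right; field; lra. }
  destruct (Rle_lt_dec y x).
  - destruct (Hb (x - y) ltac:(split; [lra| rewrite Rabs_right in Hx1 by lra; lra])) as [B _].
    replace (y + (x - y)) with x in B by ring. rewrite Rabs_right in Hk by lra. lra.
  - destruct (Hb (y - x) ltac:(split; [lra| rewrite Rabs_left in Hx1 by lra; lra])) as [_ B].
    replace (y - (y - x)) with x in B by ring. rewrite Rabs_left in Hk by lra. lra.
Qed.

Lemma RInt_three_piece g1 g2 c al be d k1 k2 k3 : c <= al -> al <= be -> be <= d -> ex_RInt g1 c d -> ex_RInt g2 c d ->
  (forall t, c < t < al -> g1 t <= g2 t + k1) -> (forall t, al < t < be -> g1 t <= g2 t + k2) ->
  (forall t, be < t < d -> g1 t <= g2 t + k3) ->
  RInt g1 c d <= RInt g2 c d + k1 * (al - c) + k2 * (be - al) + k3 * (d - be).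
Proof.
  intros H1 H2 H3 E1 E2 P1 P2 P3.
  assert (A1 : ex_RInt g1 c be) by (apply ex_RInt_sub with c d; lra || auto).
  assert (A2 : ex_RInt g1 be d) by (apply ex_RInt_sub with c d; lra || auto).
  assert (B1 : ex_RInt g2 c be) by (apply ex_RInt_sub with c d; lra || auto).
  assert (B2 : ex_RInt g2 be d) by (apply ex_RInt_sub with c d; lra || auto).
  rewrite <- (RInt_Chasles_R g1 c be d A1 A2), <- (RInt_Chasles_R g2 c be d B1 B2).
  pose proof (RInt_two_piece g1 g2 c al be k1 k2 H1 H2 A1 B1 P1 P2).
  pose proof (RInt_le_shift g1 g2 be d k3 H3 A2 B2 P3). lra.
Qed.

Section Block.
Variable F : R -> R.
Hypothesis HF : is_cdf F.
Variable r : R.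
Hypothesis Hr : 1 <= r.
Hypothesis Hmom : finite_moment r F.
Variables a b : R.
Hypotheses (Ha : 0 <= a) (Hab : a < b) (Hb : b <= 1).
Let f := Finv F.
Let Kb := K F r a b.

Let GL y : LocInt (gy F r y) a b.
Proof. eapply LocInt_sub; [apply gy_LocInt; auto; lra|lra|lra]. Qed.

Let GB y : exists B, Bdd (gy F r y) a b B.
Proof. destruct (gy_Bdd_ex F HF r Hr y Hmom) as [B HB]. exists B. eapply Bdd_sub; eauto. Qed.

Let Kge y c d : a < c -> c <= d -> d < b -> RInt (gy F r y) c d <= Kb y.
Proof. intros. destruct (GB y) as [B HB]. unfold Kb, K. apply (impInt_ge _ a b B); auto. Qed.

Let Kle y M : (forall c d, a < c -> c <= d -> d < b -> RInt (gy F r y) c d <= M) -> Kb y <= M.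
Proof. intros H. unfold Kb, K. apply impInt_le; auto. Qed.

Lemma Kb_nonneg y : 0 <= Kb y.
Proof. rewrite <- (RInt_pt (gy F r y) ((a + b) / 2)). apply Kge; lra. Qed.

Lemma Kb_convex l u v : 0 <= l <= 1 -> Kb (l * u + (1 - l) * v) <= l * Kb u + (1 - l) * Kb v.
Proof.
  intros Hl. apply Kle. intros c d H1 H2 H3.
  assert (Eu : ex_RInt (gy F r u) c d) by (apply GL; lra).
  assert (Ev : ex_RInt (gy F r v) c d) by (apply GL; lra).
  apply Rle_trans with (RInt (fun t => l * gy F r u t + (1 - l) * gy F r v t) c d).
  { apply RInt_le_R; auto. apply GL; lra. apply ex_RInt_plus_R; apply ex_RInt_scal_R; auto.
    intros t _. unfold gy. apply rpow_abs_convex; auto. }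
  rewrite RInt_plus_R by (apply ex_RInt_scal_R; auto). rewrite !RInt_scal_R by auto.
  pose proof (Kge u c d H1 H2 H3). pose proof (Kge v c d H1 H2 H3).
  apply Rplus_le_compat; apply Rmult_le_compat_l; lra.
Qed.

Lemma Kb_cont y : continuity_pt Kb y.
Proof. apply convex_cont. intros; apply Kb_convex; auto. Qed.

Let al := a + (b - a) / 4.
Let be := b - (b - a) / 4.

Lemma Kb_coercive : exists M, 0 <= M /\ forall y, M <= Rabs y -> Kb 0 + 1 <= Kb y.
Proof.
  set (C := Rabs (f al) + Rabs (f be)).
  assert (HC : forall t, al <= t <= be -> Rabs (f t) <= C).
  { intros t Ht. assert (f al <= f t) by (apply Finv_mono; auto; unfold al, be in *; lra).
    assert (f t <= f be) by (apply Finv_mono; auto; unfold al, be in *; lra).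
    unfold C. apply Rabs_le. pose proof (Rabs_pos (f al)); pose proof (Rabs_pos (f be)).
    pose proof (Rle_abs (f be)); pose proof (Rabs_maj2 (f al)). split; lra. }
  assert (Hw : 0 < be - al) by (unfold al, be; lra).
  pose proof (Kb_nonneg 0) as K0.
  exists (C + 1 + (Kb 0 + 1) / (be - al)). split.
  { pose proof (Rabs_pos (f al)); pose proof (Rabs_pos (f be)). assert (0 <= (Kb 0 + 1) / (be - al)) by (apply Rdiv_le_0_compat; lra). unfold C in *; lra. }
  intros y Hy.
  assert (HC0 : 0 <= C) by (unfold C; pose proof (Rabs_pos (f al)); pose proof (Rabs_pos (f be)); lra).
  assert (Hq : 0 <= (Kb 0 + 1) / (be - al)) by (apply Rdiv_le_0_compat; lra).
  eapply Rle_trans; [|apply (Kge y al be); unfold al, be; lra].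
  apply Rle_trans with (RInt (fun _ => Rabs y - C) al be).
  - rewrite RInt_const_R.
    assert ((Kb 0 + 1) / (be - al) * (be - al) = Kb 0 + 1) by (field; lra).
    assert ((C + 1 + (Kb 0 + 1) / (be - al) - C) * (be - al) <= (Rabs y - C) * (be - al)) by (apply Rmult_le_compat_r; lra).
    nra.
  - apply RInt_le_R; [lra|apply ex_RInt_const_R|apply GL; unfold al, be; lra|].
    intros t Ht. unfold gy. fold f. specialize (HC t ltac:(lra)).
    assert (Rabs y - C <= Rabs (f t - y)).
    { pose proof (Rabs_triang_inv y (f t)). rewrite Rabs_minus_sym in H. lra. }
    eapply Rle_trans; [exact H|]. apply rpow_ge_self; auto. lra.
Qed.

Lemma Kb_min_exists : exists y, forall z, Kb y <= Kb z.
Proof.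
  destruct Kb_coercive as [M [HM0 HM]].
  destruct (continuity_ab_min Kb (- M) M ltac:(lra) (fun c _ => Kb_cont c)) as [y [Hy1 Hy2]].
  exists y. intros z. destruct (Rle_lt_dec (Rabs z) M) as [Hz|Hz].
  - apply Hy1. apply Rabs_le_between; lra.
  - specialize (HM z ltac:(lra)). specialize (Hy1 0 ltac:(lra)). lra.
Qed.

Lemma Kb_unique : 1 < r -> forall y1 y2, (forall z, Kb y1 <= Kb z) -> (forall z, Kb y2 <= Kb z) -> y1 = y2.
Proof.
  intros Hr1 y1 y2 H1 H2. destruct (Req_dec y1 y2) as [E|Hne]; auto. exfalso.
  set (m := (y1 + y2) / 2).
  set (Dg := fun u => (rpow (Rabs (u - y1)) r + rpow (Rabs (u - y2)) r) / 2 - rpow (Rabs (u - m)) r).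
  assert (Dpos : forall u, 0 < Dg u) by (intros u; unfold Dg, m; pose proof (rpow_abs_strict r u y1 y2 Hr1 Hne); lra).
  assert (Hcomp : forall y, continuity_pt (fun u => rpow (Rabs (u - y)) r) y -> True) by auto.
  assert (Dcont : forall u, continuity_pt Dg u).
  { intros u. unfold Dg.
    assert (Cy : forall y, continuity_pt (fun u => rpow (Rabs (u - y)) r) u).
    { intros y. apply (continuity_pt_comp (fun u => Rabs (u - y)) (fun x => rpow x r)).
      - apply (continuity_pt_comp (fun u => u - y) Rabs).
        + apply continuity_pt_minus; [apply derivable_continuous_pt, derivable_pt_id| apply continuity_pt_const; intros ? ?; auto].
        + apply Rcontinuity_abs.
      - apply rpow_cont; lra. }
    apply continuity_pt_minus; [|apply Cy].
    unfold Rdiv. apply continuity_pt_mult; [apply continuity_pt_plus; apply Cy|apply continuity_pt_const; intros ? ?; auto]. }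
  assert (Hfab : f al <= f be) by (apply Finv_mono; auto; unfold al, be; lra).
  destruct (continuity_ab_min Dg (f al) (f be) Hfab (fun c _ => Dcont c)) as [u0 [Hu1 Hu2]].
  set (del := Dg u0). assert (Hdel : 0 < del) by apply Dpos.
  assert (Kmid : Kb m <= (Kb y1 + Kb y2) / 2 - del * (be - al)).
  { unfold Kb, K at 1. apply impInt_le_via; auto; [intros; apply gy_nonneg|].
    intros c0 d0 G1 G2 G3. exists (Rmin c0 al), (Rmax d0 be).
    assert (A1 := Rmin_l c0 al). assert (A2 := Rmin_r c0 al). assert (A3 := Rmax_l d0 be). assert (A4 := Rmax_r d0 be).
    assert (A5 : a < Rmin c0 al) by (apply Rmin_glb_lt; unfold al; lra).
    assert (A6 : Rmax d0 be < b) by (apply Rmax_lub_lt; unfold be; lra).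
    assert (Hab' : al <= be) by (unfold al, be; lra).
    repeat split; auto.
    set (c := Rmin c0 al) in *. set (d := Rmax d0 be) in *.
    assert (E1 : ex_RInt (gy F r y1) c d) by (apply GL; lra).
    assert (E2 : ex_RInt (gy F r y2) c d) by (apply GL; lra).
    assert (Em : ex_RInt (gy F r m) c d) by (apply GL; lra).
    set (gav := fun t => / 2 * (gy F r y1 t + gy F r y2 t)).
    assert (Eav : ex_RInt gav c d) by (apply ex_RInt_scal_R, ex_RInt_plus_R; auto).
    assert (Pw : forall t, gy F r m t <= gav t + 0).
    { intros t. unfold gav, gy; fold f. pose proof (Dpos (f t)). unfold Dg in H. lra. }
    pose proof (RInt_three_piece (gy F r m) gav c al be d 0 (- del) 0 A2 Hab' A4 Em Eav
      ltac:(intros; apply Pw) ltac:(intros t Ht; unfold gav, gy; fold f; pose proof (Hu1 (f t));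
        assert (f al <= f t <= f be) by (split; apply Finv_mono; auto; unfold al, be in *; lra);
        specialize (H H0); change (Dg u0) with del in H; unfold Dg in H; lra)
      ltac:(intros; apply Pw)) as T.
    unfold gav in T. rewrite RInt_scal_R in T by (apply ex_RInt_plus_R; auto).
    rewrite RInt_plus_R in T by auto.
    pose proof (Kge y1 c d ltac:(lra) ltac:(lra) ltac:(lra)). pose proof (Kge y2 c d ltac:(lra) ltac:(lra) ltac:(lra)).
    unfold Kb in *. lra. }
  assert (Kb y1 = Kb y2) by (apply Rle_antisym; auto).
  specialize (H1 m). assert (0 < del * (be - al)) by (apply Rmult_lt_0_compat; unfold al, be; lra). lra.
Qed.

Lemma Kb_min_le_right : 1 < r -> forall y, (forall z, Kb y <= Kb z) -> forall u, b <= u < 1 -> y <= f u.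
Proof.
  intros Hr1 y Hy u Hu. apply Rnot_lt_le; intro Hlt.
  assert (Hz : forall z, Kb (f u) <= Kb z).
  { intros z. eapply Rle_trans; [|apply Hy]. destruct (GB y) as [B HB].
    unfold Kb, K. apply (impInt_mono _ _ a b B); auto. intros t Ht. unfold gy. fold f.
    assert (f t <= f u) by (apply Finv_mono; auto; lra).
    apply rpow_le; [lra|]. split; [apply Rabs_pos|]. rewrite !Rabs_left1 by lra. lra. }
  pose proof (Kb_unique Hr1 y (f u) Hy Hz). lra.
Qed.

Lemma Kb_min_ge_left : 1 < r -> forall y, (forall z, Kb y <= Kb z) -> forall u, 0 < u <= a -> f u <= y.
Proof.
  intros Hr1 y Hy u Hu. apply Rnot_lt_le; intro Hlt.
  assert (Hz : forall z, Kb (f u) <= Kb z).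
  { intros z. eapply Rle_trans; [|apply Hy]. destruct (GB y) as [B HB].
    unfold Kb, K. apply (impInt_mono _ _ a b B); auto. intros t Ht. unfold gy. fold f.
    assert (f u <= f t) by (apply Finv_mono; auto; lra).
    apply rpow_le; [lra|]. split; [apply Rabs_pos|]. rewrite !Rabs_right by lra. lra. }
  pose proof (Kb_unique Hr1 y (f u) Hy Hz). lra.
Qed.

End Block.

Lemma BSum_le p C x y k :
  (forall i, (1 <= i <= k)%nat -> Psum p (i - 1) < Psum p i ->
     C (Psum p (i - 1)) (Psum p i) (x i) <= C (Psum p (i - 1)) (Psum p i) (y i)) ->
  BSum p C x k <= BSum p C y k.
Proof.
  induction k as [|k IH]; intros H; simpl; [lra|].
  specialize (IH (fun i Hi => H i ltac:(lia))).
  destruct (Rlt_dec (Psum p k) (Psum p k + p (S k))) as [Hl|Hl]; [|lra].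
  specialize (H (S k) ltac:(lia)). replace (S k - 1)%nat with k in H by lia. simpl in H.
  specialize (H Hl). lra.
Qed.

Lemma BSum_nonneg p C x k :
  (forall i, (1 <= i <= k)%nat -> Psum p (i - 1) < Psum p i -> 0 <= C (Psum p (i - 1)) (Psum p i) (x i)) ->
  0 <= BSum p C x k.
Proof.
  induction k as [|k IH]; intros H; simpl; [lra|].
  specialize (IH (fun i Hi => H i ltac:(lia))).
  destruct (Rlt_dec (Psum p k) (Psum p k + p (S k))) as [Hl|Hl]; [|lra].
  specialize (H (S k) ltac:(lia)). replace (S k - 1)%nat with k in H by lia. simpl in H.
  specialize (H Hl). lra.
Qed.

Lemma BSum_eq p C x y k :
  (forall i, (1 <= i <= k)%nat -> Psum p (i - 1) < Psum p i ->
     C (Psum p (i - 1)) (Psum p i) (y i) <= C (Psum p (i - 1)) (Psum p i) (x i)) ->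
  BSum p C x k <= BSum p C y k ->
  forall i, (1 <= i <= k)%nat -> Psum p (i - 1) < Psum p i ->
     C (Psum p (i - 1)) (Psum p i) (x i) = C (Psum p (i - 1)) (Psum p i) (y i).
Proof.
  induction k as [|k IH]; intros H Hs i Hi Hb; [lia|].
  pose proof (BSum_le p C y x k (fun j Hj => H j ltac:(lia))) as Hk.
  simpl in Hs.
  assert (Hlast : (if Rlt_dec (Psum p k) (Psum p k + p (S k)) then C (Psum p k) (Psum p k + p (S k)) (y (S k)) else 0)
     <= (if Rlt_dec (Psum p k) (Psum p k + p (S k)) then C (Psum p k) (Psum p k + p (S k)) (x (S k)) else 0)).
  { destruct (Rlt_dec (Psum p k) (Psum p k + p (S k))) as [Hl|Hl]; [|lra].
    specialize (H (S k) ltac:(lia)). replace (S k - 1)%nat with k in H by lia. simpl in H. apply H; auto. }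
  assert (Ek : BSum p C x k <= BSum p C y k) by lra.
  destruct (Nat.eq_dec i (S k)) as [->|Hne].
  - replace (S k - 1)%nat with k in * by lia. simpl in Hb |- *.
    revert Hs Hlast. destruct (Rlt_dec (Psum p k) (Psum p k + p (S k))) as [Hl|Hl]; [|lra]. intros. lra.
  - apply (IH (fun j Hj => H j ltac:(lia)) Ek i ltac:(lia) Hb).
Qed.

Fixpoint SA (v : nat -> R) (k : nat) : R := match k with O => 0 | S j => SA v j + Rabs (v (S j)) end.

Lemma SA_ge v k j : (1 <= j <= k)%nat -> Rabs (v j) <= SA v k.
Proof.
  induction k as [|k IH]; intros Hj; [lia|]. simpl.
  destruct (Nat.eq_dec j (S k)) as [->|Hne].
  - assert (0 <= SA v k). { clear. induction k; simpl; [lra|]. pose proof (Rabs_pos (v (S k))). lra. } lra.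
  - specialize (IH ltac:(lia)). pose proof (Rabs_pos (v (S k))). lra.
Qed.

Fixpoint RM (L : R) (w : nat -> R) (k : nat) : R := match k with O => L | S j => Rmax (RM L w j) (w (S j)) end.

Lemma fill n (blk : nat -> Prop) (v : nat -> R) :
  (forall i j, (1 <= i)%nat -> (i < j)%nat -> (j <= n)%nat -> blk i -> blk j -> v i <= v j) ->
  exists xs, in_Xi n xs /\ forall i, (1 <= i <= n)%nat -> blk i -> xs i = v i.
Proof.
  intros Hord. set (L := - SA v n).
  set (w := fun i => if excluded_middle_informative (blk i) then v i else L).
  exists (RM L w). split.
  - intros i H1 H2. simpl. apply Rmax_l.
  - intros i Hi Hb.
    assert (HL : forall j, (1 <= j <= n)%nat -> L <= v j).
    { intros j Hj. pose proof (SA_ge v n j Hj). pose proof (Rabs_maj2 (v j)). unfold L; lra. }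
    assert (Hup : forall k, (k <= i)%nat -> RM L w k <= v i).
    { induction k as [|k IH]; intros Hk; simpl; [apply HL; lia|].
      apply Rmax_lub; [apply IH; lia|]. unfold w.
      destruct (excluded_middle_informative (blk (S k))) as [Hb'|Hb']; [|apply HL; lia].
      destruct (Nat.eq_dec (S k) i) as [->|Hne]; [lra|]. apply Hord; auto; lia. }
    apply Rle_antisym; [apply Hup; lia|].
    destruct i as [|i]; [lia|]. simpl. eapply Rle_trans; [|apply Rmax_r]. unfold w.
    destruct (excluded_middle_informative (blk (S i))); [lra|contradiction].
Qed.

Section Main.
Variable F : R -> R.
Hypothesis HF : is_cdf F.
Variable r : R.
Hypothesis Hr : 1 <= r.
Hypothesis Hmom : finite_moment r F.
Variables (n : nat) (p : nat -> R).
Hypothesis HPi : in_Pi n p.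

Let Hp : forall i, (1 <= i <= n)%nat -> 0 <= p i.
Proof. apply HPi. Qed.

Let C := K F r.

Definition blk i := Psum p (i - 1) < Psum p i.

Definition bopt (x : nat -> R) := forall i, (1 <= i <= n)%nat -> blk i ->
  forall z, C (Psum p (i - 1)) (Psum p i) (x i) <= C (Psum p (i - 1)) (Psum p i) z.

Lemma blk_range i : (1 <= i <= n)%nat -> 0 <= Psum p (i - 1) /\ Psum p i <= 1.
Proof.
  intros Hi. split. apply (Psum_nonneg n p Hp); lia.
  destruct HPi as [_ E]. rewrite <- E. apply (Psum_mono n p Hp); lia.
Qed.

Lemma S_nonneg x : 0 <= BSum p C x n.
Proof.
  apply BSum_nonneg. intros i Hi Hb. destruct (blk_range i Hi).
  unfold C. apply (Kb_nonneg F HF r Hr Hmom); auto.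
Qed.

Lemma dr_eq x : in_Xi n x -> d_r r (disc_cdf n p x) F = rpow (BSum p C x n) (1 / r).
Proof. intros Hx. apply d_r_decomp; auto. Qed.

Lemma min_iff_bopt xs : in_Xi n xs -> bopt xs -> forall x, in_Xi n x ->
  (is_minimizer r F n p x <-> bopt x).
Proof.
  intros Hxs Hopt x Hx. assert (Hr' : 0 < 1 / r) by (apply Rdiv_lt_0_compat; lra). split.
  - intros Hmin. specialize (Hmin xs Hxs). rewrite !dr_eq in Hmin by auto.
    apply rpow_le_inv in Hmin; auto; try apply S_nonneg.
    assert (Heq := BSum_eq p C x xs n (fun i Hi Hb => Hopt i Hi Hb (x i)) Hmin).
    intros i Hi Hb z. rewrite (Heq i Hi Hb). apply Hopt; auto.
  - intros Hb y Hy. rewrite !dr_eq by auto. apply rpow_le; auto. split; [apply S_nonneg|].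
    apply BSum_le. intros i Hi Hbl. apply Hb; auto.
Qed.

Lemma exists_bopt : exists xs, in_Xi n xs /\ bopt xs.
Proof.
  destruct (Rle_lt_or_eq_dec 1 r Hr) as [Hr1|Hr1].
  -
    set (v := fun i => epsilon (inhabits 0) (fun y => forall z, C (Psum p (i - 1)) (Psum p i) y <= C (Psum p (i - 1)) (Psum p i) z)).
    assert (Hv : forall i, (1 <= i <= n)%nat -> blk i -> forall z, C (Psum p (i - 1)) (Psum p i) (v i) <= C (Psum p (i - 1)) (Psum p i) z).
    { intros i Hi Hb. destruct (blk_range i Hi). unfold v. apply epsilon_spec.
      apply (Kb_min_exists F HF r Hr Hmom); auto. }
    destruct (fill n blk v) as [xs [Hxs Hxv]].
    { intros i j Hi Hij Hjn Hbi Hbj.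
      destruct (blk_range i ltac:(lia)) as [A1 A2]. destruct (blk_range j ltac:(lia)) as [B1 B2].
      assert (Pij : Psum p i <= Psum p (j - 1)) by (apply (Psum_mono n p Hp); lia).
      unfold blk in *.
      assert (E1 : v i <= Finv F (Psum p i)).
      { apply (Kb_min_le_right F HF r Hr Hmom (Psum p (i - 1)) (Psum p i)); auto. apply Hv; auto; lia. lra. }
      assert (E2 : Finv F (Psum p (j - 1)) <= v j).
      { apply (Kb_min_ge_left F HF r Hr Hmom (Psum p (j - 1)) (Psum p j)); auto. apply Hv; auto; lia. lra. }
      assert (Finv F (Psum p i) <= Finv F (Psum p (j - 1))) by (apply Finv_mono; auto; lra).
      lra. }
    exists xs. split; auto. intros i Hi Hb z. rewrite Hxv by auto. apply Hv; auto.
  -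
    assert (Hmom1 : finite_moment 1 F) by (rewrite Hr1; auto).
    set (v := fun i => Finv F ((Psum p (i - 1) + Psum p i) / 2)).
    assert (Hv : forall i, (1 <= i <= n)%nat -> blk i -> forall z, C (Psum p (i - 1)) (Psum p i) (v i) <= C (Psum p (i - 1)) (Psum p i) z).
    { intros i Hi Hb. destruct (blk_range i Hi). unfold blk in Hb. unfold v, C.
      set (m := (Psum p (i - 1) + Psum p i) / 2).
      assert (Hm : 0 < m < 1) by (unfold m; lra).
      rewrite <- Hr1. apply (median_min F HF Hmom1); auto.
      - fold m. apply Rnot_lt_le; intro Hlt. pose proof (Finv_gt_of F HF m (Finv F m) Hm Hlt). lra.
      - fold m. intros w Hw. apply Rnot_lt_le; intro Hlt. pose proof (Finv_le_of F HF m w Hm Hlt). lra. }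
    destruct (fill n blk v) as [xs [Hxs Hxv]].
    { intros i j Hi Hij Hjn Hbi Hbj.
      destruct (blk_range i ltac:(lia)) as [A1 A2]. destruct (blk_range j ltac:(lia)) as [B1 B2].
      assert (Pij : Psum p i <= Psum p (j - 1)) by (apply (Psum_mono n p Hp); lia).
      unfold blk, v in *. apply Finv_mono; auto; lra. }
    exists xs. split; auto. intros i Hi Hb z. rewrite Hxv by auto. apply Hv; auto.
Qed.

Lemma tau_spec : 1 < r -> forall a b, 0 <= a -> a < b -> b <= 1 -> forall y,
  (forall z, C a b y <= C a b z) <-> y = tau r a b (Finv F).
Proof.
  intros Hr1 a b Ha Hab Hb y.
  destruct (Kb_min_exists F HF r Hr Hmom a b Ha Hab Hb) as [ys Hys].
  assert (Hr' : 0 < 1 / r) by (apply Rdiv_lt_0_compat; lra).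
  assert (ELr : forall t, Lr_dist r a b (Finv F) t = rpow (C a b t) (1 / r)) by reflexivity.
  assert (Kn : forall t, 0 <= C a b t) by (intros; apply (Kb_nonneg F HF r Hr Hmom); auto).
  assert (Uys : is_unique_min r a b (Finv F) ys).
  { split.
    - intros s. rewrite !ELr. apply rpow_le; auto.
    - intros s Hs. apply (Kb_unique F HF r Hr Hmom a b Ha Hab Hb Hr1); auto.
      intros z. specialize (Hs z). rewrite !ELr in Hs. apply rpow_le_inv in Hs; auto. }
  assert (Ut : is_unique_min r a b (Finv F) (tau r a b (Finv F))).
  { unfold tau. apply epsilon_spec. exists ys; auto. }
  assert (Ets : tau r a b (Finv F) = ys) by (apply (proj2 Uys); apply (proj1 Ut)).
  rewrite Ets. split.
  - intros Hy. apply (Kb_unique F HF r Hr Hmom a b Ha Hab Hb Hr1); auto.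
  - intros ->; auto.
Qed.

End Main.

Theorem theorem5p4 (r : R) (F : R -> R) (n : nat) (p : nat -> R) :
  1 <= r -> is_cdf F -> finite_moment r F -> in_Pi n p ->
  (exists x, in_Xi n x /\ is_minimizer r F n p x) /\
  (r = 1 -> forall x, in_Xi n x ->
     (is_minimizer r F n p x <->
      forall i, (1 <= i <= n)%nat -> Psum p (i - 1) < Psum p i ->
        in_Q F ((Psum p (i - 1) + Psum p i) / 2) (x i))) /\
  (1 < r -> forall x, in_Xi n x ->
     (is_minimizer r F n p x <->
      forall i, (1 <= i <= n)%nat -> Psum p (i - 1) < Psum p i ->
        x i = tau r (Psum p (i - 1)) (Psum p i) (Finv F))).
Proof.
  intros Hr HF Hmom HPi.
  destruct (exists_bopt F HF r Hr Hmom n p HPi) as [xs [Hxs Hopt]].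
  pose proof (min_iff_bopt F HF r Hr Hmom n p HPi xs Hxs Hopt) as MI.
  split; [|split].
  - exists xs. split; auto. apply MI; auto.
  - intros Hr1 x Hx. rewrite (MI x Hx). subst r. unfold bopt, blk. split.
    + intros Hb i Hi Hbi. destruct (blk_range n p HPi i Hi) as [A1 A2].
      apply in_Q_iff; auto; [lra|].
      exact (median_nec F HF Hmom _ _ A1 Hbi A2 (x i) (Hb i Hi Hbi)).
    + intros HQ i Hi Hbi z. destruct (blk_range n p HPi i Hi) as [A1 A2].
      specialize (HQ i Hi Hbi). apply in_Q_iff in HQ; auto; [|lra].
      destruct HQ. apply (median_min F HF Hmom); auto.
  - intros Hr1 x Hx. rewrite (MI x Hx). unfold bopt, blk. split.
    + intros Hb i Hi Hbi. destruct (blk_range n p HPi i Hi) as [A1 A2].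
      apply (tau_spec F HF r Hr Hmom Hr1); auto.
    + intros HT i Hi Hbi z. destruct (blk_range n p HPi i Hi) as [A1 A2].
      apply (tau_spec F HF r Hr Hmom Hr1); auto.
Qed.
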